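(* Let $\mathbb{A}=\{a_n\}_{n\in\mathbb{N}^+}$ be a set of integers $\ge2$, listed in increasing order, and let $\mathbb{A}'=\{a'_n\}_{n\in\mathbb{N}^+}\subset\mathbb{A}$ be a subset such that $\sum_{n=1}^{\infty}e^{-a'_n t}$ is majorized by $t^{-1/2}$ as $t\to0^+$. Let $\tilde{\mathbb{A}}=\mathbb{A}\setminus\mathbb{A}'=\{\tilde a_n\}_{n\in\mathbb{N}^+}$, listed in increasing order. If for some $i,j\in\mathbb{N}$ the Dirichlet series $$\mathcal{D}_{\{\tilde a_{2^i n+j}\}_{n\in\mathbb{N}^+}}(s)=\sum_{n=1}^{\infty}\tilde a_{2^in+j}^{-s}$$ admits a non-singular analytic continuation to some domain $\mathcal{U}\subset\mathbb{C}$, then (the continuation of) $\zeta_{\mathbb{A}}$ satisfies $\zeta_{\mathbb{A}}(s)\neq0$ for all $s\in\mathcal{U}\cap\{s:\Re(s)>1/2\}$.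
   Context: For a strictly increasing sequence $\mathbb{B}=\{b_n\}$ of positive integers, $\mathcal{D}_{\mathbb{B}}(s)=\sum_n b_n^{-s}$, and if $1\notin\mathbb{B}$, $\zeta_{\mathbb{B}}(s)=\prod_n \frac{1}{1-b_n^{-s}}$ (defined for $\Re(s)>1$ and by analytic continuation elsewhere). ''$\sum e^{-a'_nt}$ is majorized by $t^{-1/2}$ as $t\to0^+$'' means there is $C>0$ with $\sum_n e^{-a'_nt}\le Ct^{-1/2}$ for all sufficiently small $t>0$. *)

(* Defs.v *)
From Stdlib Require Import Reals.
From Coquelicot Require Import Coquelicot.
Open Scope R_scope.

(* Sequences are indexed by N^+ : b : nat -> nat, only values b n with n >= 1 matter. *)
Definition strictly_increasing_pos (b : nat -> nat) : Prop :=
  forall n : nat, (1 <= n)%nat -> (b n < b (S n))%nat.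

Definition in_seq (b : nat -> nat) (x : nat) : Prop :=
  exists n : nat, (1 <= n)%nat /\ b n = x.

(* complex power  b^{-s} = exp(-s log b)  for a positive integer b *)
Definition cpow_neg (b : nat) (s : C) : C :=
  (exp (- Re s * ln (INR b)) * cos (Im s * ln (INR b)),
   - (exp (- Re s * ln (INR b)) * sin (Im s * ln (INR b)))).

Fixpoint zeta_partial (b : nat -> nat) (s : C) (N : nat) : C :=
  match N with
  | O => RtoC 1
  | S N' => Cmult (zeta_partial b s N') (Cinv (Cminus (RtoC 1) (cpow_neg (b (S N')) s)))
  end.

(* zeta_B(s) = z, i.e. the infinite product defining zeta_B converges to z *)
Definition zeta_value (b : nat -> nat) (s : C) (z : C) : Prop :=
  filterlim (zeta_partial b s) eventually (locally z).

Definition holomorphic_on (U : C -> Prop) (f : C -> C) : Prop :=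
  forall z : C, U z -> ex_derive (K := C_AbsRing) (V := C_NormedModule) f z.

Definition connected_set (U : C -> Prop) : Prop :=
  forall V W : C -> Prop, open V -> open W ->
    (forall z, U z -> V z \/ W z) ->
    (forall z, U z -> V z -> W z -> False) ->
    (exists z, U z /\ V z) -> (exists z, U z /\ W z) -> False.

Definition is_domain (U : C -> Prop) : Prop :=
  open U /\ connected_set U /\ exists z, U z.

(* Main.v *)
Require Import Defs.
From Stdlib Require Import Reals Lra Lia Psatz ClassicalEpsilon.
From Coquelicot Require Import Coquelicot.
Open Scope R_scope.

Lemma cs2 v1 v2 d1 d2 : v1*d1+v2*d2 <= sqrt(v1^2+v2^2) * sqrt(d1^2+d2^2).
Proof.
  rewrite <- sqrt_mult by nra.
  destruct (Rle_or_lt (v1*d1+v2*d2) 0).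
  - apply Rle_trans with 0; auto; apply sqrt_pos.
  - rewrite <- (sqrt_pow2 (v1*d1+v2*d2)) by lra. apply sqrt_le_1_alt.
    assert (0 <= (v1*d2-v2*d1)^2) by (apply pow2_ge_0). nra.
Qed.

Lemma mvt2 (p1 p2 m d1 d2 dm : R -> R) a b : a <= b ->
  (forall t, a <= t <= b -> derivable_pt_lim p1 t (d1 t) /\ derivable_pt_lim p2 t (d2 t)
     /\ derivable_pt_lim m t (dm t) /\ sqrt (d1 t ^2 + d2 t ^2) <= dm t) ->
  Cmod (p1 b - p1 a, p2 b - p2 a) <= m b - m a.
Proof.
  intros Hab H.
  destruct (Req_dec a b) as [<-|Hne].
  { replace (p1 a - p1 a, p2 a - p2 a) with (RtoC 0).
    rewrite Cmod_0; lra. unfold RtoC; f_equal; ring. }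
  assert (Hlt : a < b) by lra.
  set (v1 := p1 b - p1 a). set (v2 := p2 b - p2 a).
  set (nv := Cmod (v1, v2)).
  assert (Hm : 0 <= m b - m a).
  { destruct (MVT_cor2 m dm a b Hlt) as [c [Hc1 Hc2]].
    intros c Hc; apply H; lra.
    rewrite Hc1. destruct (H c ltac:(lra)) as [_ [_ [_ Hd]]].
    pose proof (sqrt_pos (d1 c ^2 + d2 c^2)). nra. }
  destruct (MVT_cor2 (fun t => v1 * p1 t + v2 * p2 t - nv * m t)
      (fun t => v1 * d1 t + v2 * d2 t - nv * dm t) a b Hlt) as [c [Hc1 Hc2]].
  { intros c Hc. destruct (H c Hc) as [D1 [D2 [D3 _]]].
    apply derivable_pt_lim_minus. apply derivable_pt_lim_plus.
    apply derivable_pt_lim_scal; auto. apply derivable_pt_lim_scal; auto.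
    apply derivable_pt_lim_scal; auto. }
  destruct (H c ltac:(lra)) as [_ [_ [_ Hd]]].
  pose proof (cs2 v1 v2 (d1 c) (d2 c)) as Hcs.
  assert (Hnv : nv = sqrt (v1^2+v2^2)) by reflexivity.
  assert (Hnv0 : 0 <= nv) by (rewrite Hnv; apply sqrt_pos).
  assert (Hneg : v1 * d1 c + v2 * d2 c - nv * dm c <= 0).
  { rewrite <- Hnv in Hcs. nra. }
  assert (Hsq : nv * nv = v1^2 + v2^2) by (rewrite Hnv; rewrite sqrt_sqrt; nra).
  assert (nv*nv - nv * (m b - m a) <= 0).
  { rewrite Hsq. unfold v1, v2 in *. nra. }
  fold nv. destruct (Req_dec nv 0) as [E|E]. lra.
  apply Rmult_le_reg_l with nv. lra. nra.
Qed.

Definition CD (f : C -> C) (z d : C) := forall eps, 0 < eps -> exists del, 0 < del /\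
  forall y, Cmod (y - z) < del -> Cmod (f y - f z - d * (y - z)) <= eps * Cmod (y - z).

Lemma CD_derive f z d : CD f z d -> is_derive (K:=C_AbsRing) (V:=C_NormedModule) f z d.
Proof.
  intros H. split. apply is_linear_scal_l.
  intros x' Hx'. apply (is_filter_lim_locally_unique (K:=C_AbsRing) (V:=AbsRing_NormedModule C_AbsRing)) in Hx'. subst x'.
  intros eps. destruct (H eps (cond_pos eps)) as [del [Hd H']].
  assert (Hd2 : 0 < del / 2) by lra.
  exists (mkposreal _ Hd). intros y Hy.
  assert (Hy2 : Cmod (y - z) < del) by exact Hy.
  specialize (H' y Hy2).
  change (Cmod (f y - f z - (y - z) * d) <= eps * Cmod (y - z)).
  rewrite (Cmult_comm (y - z) d). exact H'.
Qed.

Lemma derive_CD f z d : is_derive (K:=C_AbsRing) (V:=C_NormedModule) f z d -> CD f z d.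
Proof.
  intros [_ H] eps Heps.
  specialize (H z (fun P HP => HP)).
  destruct (H (mkposreal _ Heps)) as [r Hr].
  exists r. split. apply cond_pos. intros y Hy.
  specialize (Hr y Hy). simpl in Hr.
  change (Cmod (f y - f z - (y - z) * d) <= eps * Cmod (y - z)) in Hr.
  rewrite (Cmult_comm (y - z) d) in Hr. exact Hr.
Qed.

Lemma CD_derive' f z d : CD f z d -> is_derive (K:=C_AbsRing) (V:=AbsRing_NormedModule C_AbsRing) f z d.
Proof.
  intros H. split. apply is_linear_scal_l.
  intros x' Hx'. apply (is_filter_lim_locally_unique (K:=C_AbsRing) (V:=AbsRing_NormedModule C_AbsRing)) in Hx'. subst x'.
  intros eps. destruct (H eps (cond_pos eps)) as [del [Hd H']].
  assert (Hd2 : 0 < del / 2) by lra.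
  exists (mkposreal _ Hd). intros y Hy.
  assert (Hy2 : Cmod (y - z) < del) by exact Hy.
  specialize (H' y Hy2).
  change (Cmod (f y - f z - (y - z) * d) <= eps * Cmod (y - z)).
  rewrite (Cmult_comm (y - z) d). exact H'.
Qed.

Lemma derive_CD' f z d : is_derive (K:=C_AbsRing) (V:=AbsRing_NormedModule C_AbsRing) f z d -> CD f z d.
Proof.
  intros [_ H] eps Heps.
  specialize (H z (fun P HP => HP)).
  destruct (H (mkposreal _ Heps)) as [r Hr].
  exists r. split. apply cond_pos. intros y Hy.
  specialize (Hr y Hy). simpl in Hr.
  change (Cmod (f y - f z - (y - z) * d) <= eps * Cmod (y - z)) in Hr.
  rewrite (Cmult_comm (y - z) d) in Hr. exact Hr.
Qed.

Lemma im_le_Cmod (c : C) : Rabs (snd c) <= Cmod c.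
Proof.
  unfold Cmod. rewrite <- sqrt_Rsqr_abs. apply sqrt_le_1_alt. unfold Rsqr.
  pose proof (pow2_ge_0 (fst c)). nra.
Qed.

Ltac ceq := apply injective_projections; simpl; ring.

Lemma Cmod_RtoC_mult (t : R) (w : C) : Cmod (RtoC t * w) = Rabs t * Cmod w.
Proof. rewrite Cmod_mult, Cmod_R. reflexivity. Qed.

Lemma CD_line_gen (P : C -> R) f D z h t :
  (forall a b, P (Cminus a b) = P a - P b) ->
  (forall a, Rabs (P a) <= Cmod a) ->
  (forall (r : R) a, P (Cmult (RtoC r) a) = r * P a) ->
  CD f (z + RtoC t * h)%C D ->
  derivable_pt_lim (fun u => P (f (z + RtoC u * h)%C)) t (P (Cmult D h)).
Proof.
  intros Pm Pb Ps H eps Heps.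
  set (K := Cmod h + 1).
  assert (HK : 0 < K) by (unfold K; pose proof (Cmod_ge_0 h); lra).
  destruct (H (eps / (2*K)) ltac:(apply Rdiv_lt_0_compat; lra)) as [del [Hdel H']].
  assert (Hd : 0 < del / K) by (apply Rdiv_lt_0_compat; lra).
  exists (mkposreal _ Hd). simpl. intros tau Htau Hlt.
  set (z0 := (z + RtoC t * h)%C).
  set (y := (z + RtoC (t + tau) * h)%C).
  assert (Hy : (y - z0 = RtoC tau * h)%C) by (unfold y, z0; ceq).
  assert (Hm : Cmod (y - z0) = Rabs tau * Cmod h) by (rewrite Hy; apply Cmod_RtoC_mult).
  assert (Hh : Cmod h < K) by (unfold K; lra).
  assert (Htp : 0 < Rabs tau) by (apply Rabs_pos_lt; auto).
  assert (Hlt2 : Cmod (y - z0) < del).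
  { rewrite Hm. apply Rle_lt_trans with (Rabs tau * K).
    apply Rmult_le_compat_l; lra.
    apply Rmult_lt_reg_r with (/K). apply Rinv_0_lt_compat; lra.
    rewrite Rmult_assoc, Rinv_r by lra. lra. }
  specialize (H' y Hlt2).
  assert (E : P (f y) - P (f z0) - tau * P (D * h)%C = P (f y - f z0 - D * (y - z0))%C).
  { rewrite Hy. rewrite !Pm. replace (D * (RtoC tau * h))%C with (RtoC tau * (D * h))%C by ceq.
    rewrite Ps. ring. }
  change (f (z + RtoC (t + tau) * h)%C) with (f y). change (f (z + RtoC t * h)%C) with (f z0).
  replace ((P (f y) - P (f z0)) / tau - P (D * h)%C) with
      ((P (f y) - P (f z0) - tau * P (D * h)%C) / tau) by (field; auto).
  rewrite E. unfold Rdiv. rewrite Rabs_mult, Rabs_inv.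
  apply Rle_lt_trans with (eps / (2 * K) * Cmod (y - z0) * / Rabs tau).
  apply Rmult_le_compat_r. left; apply Rinv_0_lt_compat; auto.
  eapply Rle_trans. apply Pb. auto.
  rewrite Hm. field_simplify; try lra.
  apply Rmult_lt_reg_r with (2*K). lra. field_simplify; try lra. nra.
Qed.

Lemma cmvt f D m dm z h a b : a <= b ->
  (forall u, a <= u <= b -> CD f (z + RtoC u * h)%C (D u) /\ derivable_pt_lim m u (dm u)
      /\ Cmod (D u * h) <= dm u) ->
  Cmod (f (z + RtoC b * h)%C - f (z + RtoC a * h)%C) <= m b - m a.
Proof.
  intros Hab H.
  apply (mvt2 (fun u => fst (f (z + RtoC u * h)%C)) (fun u => snd (f (z + RtoC u * h)%C)) m
     (fun u => fst (Cmult (D u) h)) (fun u => snd (Cmult (D u) h)) dm a b Hab).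
  intros t Ht. destruct (H t Ht) as [H1 [H2 H3]]. repeat split; auto.
  - apply (CD_line_gen (fun w => fst w)); [intros; simpl; ring | intros; apply re_le_Cmod |
      intros; simpl; ring | exact H1].
  - apply (CD_line_gen (fun w => snd w)); [intros; simpl; ring | intros; apply im_le_Cmod |
      intros; simpl; ring | exact H1].
Qed.

Definition cexp (z : C) : C := (exp (fst z) * cos (snd z), exp (fst z) * sin (snd z)).

Lemma exp_le x y : x <= y -> exp x <= exp y.
Proof. intros [H|H]. left; apply exp_increasing; auto. subst; lra. Qed.

Lemma cexp_plus u v : cexp (u + v)%C = (cexp u * cexp v)%C.
Proof.
  unfold cexp. destruct u as [a b], v as [c d]; cbn [fst snd Cplus].
  rewrite exp_plus, cos_plus, sin_plus. apply injective_projections; simpl; ring.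
Qed.

Lemma Cmod_cexp z : Cmod (cexp z) = exp (fst z).
Proof.
  unfold cexp, Cmod; cbn [fst snd].
  replace ((exp (fst z) * cos (snd z)) ^ 2 + (exp (fst z) * sin (snd z)) ^ 2)
    with (exp (fst z) ^ 2) by (pose proof (sin2_cos2 (snd z)); unfold Rsqr in *; nra).
  apply sqrt_pow2. left; apply exp_pos.
Qed.

Lemma cexp_neq0 z : cexp z <> RtoC 0.
Proof.
  intros H. pose proof (Cmod_cexp z). rewrite H, Cmod_0 in H0.
  pose proof (exp_pos (fst z)). lra.
Qed.

Lemma cexp_0 : cexp (RtoC 0) = RtoC 1.
Proof. unfold cexp; simpl. rewrite exp_0, cos_0, sin_0. apply injective_projections; simpl; ring. Qed.

Lemma cexp_line_der (x y u : R) :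
  derivable_pt_lim (fun u => exp (u*x) * cos (u*y)) u (fst ((x,y) * cexp (RtoC u * (x,y))))%C /\
  derivable_pt_lim (fun u => exp (u*x) * sin (u*y)) u (snd ((x,y) * cexp (RtoC u * (x,y))))%C.
Proof.
  unfold cexp. cbn. split; apply is_derive_Reals; auto_derive; auto; rewrite ?Rmult_0_l, ?Rmult_0_r, ?Rplus_0_r, ?Rminus_0_r; ring_simplify; reflexivity.
Qed.

Lemma cexp_line_val (x y u : R) :
  cexp (RtoC u * (x,y))%C = (exp (u*x) * cos (u*y), exp (u*x) * sin (u*y)).
Proof. unfold cexp. cbn. f_equal; f_equal; f_equal; ring. Qed.

Lemma exp_ux_le (x y u : R) : 0 <= u <= 1 -> exp (u * x) <= exp (Cmod (x,y)).
Proof.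
  intros Hu. apply exp_le. pose proof (Cmod_ge_0 (x,y)).
  pose proof (re_le_Cmod (x,y)) as Hr. cbn in Hr. unfold Rabs in Hr.
  destruct (Rcase_abs x); nra.
Qed.

Lemma cexp_bound1 (h : C) (t : R) : 0 <= t <= 1 ->
  Cmod (cexp (RtoC t * h)%C - RtoC 1) <= t * (Cmod h * exp (Cmod h)).
Proof.
  intros Ht. destruct h as [x y].
  pose proof (mvt2 (fun u => exp (u*x) * cos (u*y)) (fun u => exp (u*x) * sin (u*y))
    (fun u => u * (Cmod (x,y) * exp (Cmod (x,y))))
    (fun u => fst ((x,y) * cexp (RtoC u * (x,y))))%C
    (fun u => snd ((x,y) * cexp (RtoC u * (x,y))))%C
    (fun u => Cmod (x,y) * exp (Cmod (x,y))) 0 t ltac:(lra)) as H.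
  match type of H with ?A -> _ => assert A as HA end.
  { intros u Hu. destruct (cexp_line_der x y u) as [D1 D2]. repeat split; auto.
    - apply is_derive_Reals. auto_derive; auto. ring.
    - change (Cmod ((x,y) * cexp (RtoC u * (x,y)))%C <= Cmod (x, y) * exp (Cmod (x, y))).
      rewrite Cmod_mult, Cmod_cexp. apply Rmult_le_compat_l. apply Cmod_ge_0.
      cbn [fst]. replace (fst (RtoC u * (x,y))%C) with (u * x) by (cbn; ring).
      apply exp_ux_le; lra. }
  try specialize (H HA). cbv beta in H.
  rewrite !Rmult_0_l, exp_0, cos_0, sin_0, Rminus_0_r in H.
  unfold cexp. cbn [fst snd Cmult RtoC].
  replace (t * x - 0 * y) with (t * x) by ring. replace (t * y + 0 * x) with (t * y) by ring.
  replace (Cminus (exp (t * x) * cos (t * y), exp (t * x) * sin (t * y)) (RtoC 1)) with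
    (exp (t * x) * cos (t * y) - 1 * 1, exp (t * x) * sin (t * y) - 1 * 0)
    by (apply injective_projections; cbn; ring).
  exact H.
Qed.

Lemma cexp_bound2 (h : C) : Cmod (cexp h - RtoC 1 - h) <= Cmod h ^ 2 * exp (Cmod h) / 2.
Proof.
  destruct h as [x y]. set (K := Cmod (x,y)).
  pose proof (mvt2 (fun u => exp (u*x) * cos (u*y) - 1 - u * x)
    (fun u => exp (u*x) * sin (u*y) - u * y)
    (fun u => u^2 / 2 * (K ^ 2 * exp K))
    (fun u => fst ((x,y) * (cexp (RtoC u * (x,y)) - RtoC 1)))%C
    (fun u => snd ((x,y) * (cexp (RtoC u * (x,y)) - RtoC 1)))%C
    (fun u => u * (K ^ 2 * exp K)) 0 1 ltac:(lra)) as H.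
  match type of H with ?A -> _ => assert A as HA end.
  { intros u Hu. repeat split.
    - apply is_derive_Reals. cbv beta. rewrite cexp_line_val. cbn. auto_derive; auto. ring.
    - apply is_derive_Reals. cbv beta. rewrite cexp_line_val. cbn. auto_derive; auto. ring.
    - apply is_derive_Reals. auto_derive; auto. field.
    - change (Cmod ((x,y) * (cexp (RtoC u * (x,y)) - RtoC 1))%C <= u * (K ^ 2 * exp K)).
      rewrite Cmod_mult. pose proof (cexp_bound1 (x,y) u Hu). fold K in H.
      pose proof (Cmod_ge_0 (x,y)). fold K in H0.
      replace (u * (K^2 * exp K)) with (K * (u * (K * exp K))) by ring.
      apply Rmult_le_compat_l; auto. }
  try specialize (H HA). cbv beta in H. rewrite !Rmult_0_l, exp_0, cos_0, sin_0 in H.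
  replace (Cminus (Cminus (cexp (x,y)) (RtoC 1)) (x,y)) with
    (exp (1 * x) * cos (1 * y) - 1 - 1 * x - (1 * 1 - 1 - 0),
     exp (1 * x) * sin (1 * y) - 1 * y - (1 * 0 - 0))
    by (unfold cexp; apply injective_projections; cbn; rewrite !Rmult_1_l; ring).
  eapply Rle_trans. exact H. fold K. lra.
Qed.

Lemma cexp_CD z : CD cexp z (cexp z).
Proof.
  intros eps Heps.
  set (E := exp (fst z)).
  assert (HE : 0 < E) by apply exp_pos.
  exists (Rmin 1 (eps / (E * exp 1))). split.
  { apply Rmin_glb_lt. lra. apply Rdiv_lt_0_compat; auto. pose proof (exp_pos 1); nra. }
  intros y Hy. set (h := (y - z)%C).
  assert (Ey : y = (z + h)%C) by (unfold h; ceq).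
  rewrite Ey, cexp_plus.
  replace (cexp z * cexp h - cexp z - cexp z * h)%C with (cexp z * (cexp h - RtoC 1 - h))%C by ceq.
  rewrite Cmod_mult, Cmod_cexp. fold E.
  pose proof (cexp_bound2 h) as B.
  fold h in Hy. pose proof (Rmin_l 1 (eps / (E * exp 1))). pose proof (Rmin_r 1 (eps / (E * exp 1))).
  assert (Hh : 0 <= Cmod h) by apply Cmod_ge_0.
  assert (Hex : exp (Cmod h) <= exp 1) by (apply exp_le; lra).
  assert (He1 : 0 < exp 1) by apply exp_pos.
  assert (Hc : Cmod h * (E * exp 1) <= eps).
  { assert (Cmod h <= eps / (E * exp 1)) by lra.
    apply Rmult_le_compat_r with (r := E * exp 1) in H1; [|nra].
    unfold Rdiv in H1. rewrite Rmult_assoc, Rinv_l, Rmult_1_r in H1 by nra. lra. }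
  apply Rle_trans with (E * (Cmod h ^ 2 * exp (Cmod h) / 2)).
  apply Rmult_le_compat_l; lra.
  assert (0 <= exp (Cmod h)) by (left; apply exp_pos).
  apply Rle_trans with (Cmod h * (Cmod h * (E * exp 1)) / 2).
  { assert (0 <= Cmod h * Cmod h) by nra.
    assert (Cmod h * Cmod h * exp (Cmod h) <= Cmod h * Cmod h * exp 1)
      by (apply Rmult_le_compat_l; auto).
    replace (Cmod h ^ 2) with (Cmod h * Cmod h) by ring. nra. }
  assert (Cmod h * (Cmod h * (E * exp 1)) <= Cmod h * eps) by (apply Rmult_le_compat_l; auto).
  nra.
Qed.

Lemma CD_ext f g z d : (forall w, f w = g w) -> CD f z d -> CD g z d.
Proof.
  intros E H eps Heps. destruct (H eps Heps) as [del [Hd H']]. exists del; split; auto.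
  intros y Hy. rewrite <- !E. auto.
Qed.

Lemma CD_plus f g z df dg : CD f z df -> CD g z dg -> CD (fun w => f w + g w)%C z (df + dg)%C.
Proof.
  intros Hf Hg. apply derive_CD'. apply CD_derive' in Hf. apply CD_derive' in Hg.
  exact (is_derive_plus (K:=C_AbsRing) (V:=AbsRing_NormedModule C_AbsRing) f g z df dg Hf Hg).
Qed.

Lemma CD_const c z : CD (fun _ => c) z (RtoC 0).
Proof. apply derive_CD'. exact (is_derive_const (K:=C_AbsRing) (V:=AbsRing_NormedModule C_AbsRing) c z). Qed.

Lemma CD_id z : CD (fun w => w) z (RtoC 1).
Proof. apply derive_CD'. exact (is_derive_id (K:=C_AbsRing) z). Qed.

Lemma CD_mult f g z df dg : CD f z df -> CD g z dg ->
  CD (fun w => f w * g w)%C z (df * g z + f z * dg)%C.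
Proof.
  intros Hf Hg. apply derive_CD'. apply CD_derive' in Hf. apply CD_derive' in Hg.
  exact (is_derive_mult (K:=C_AbsRing) f g z df dg Hf Hg Cmult_comm).
Qed.

Lemma CD_comp f g z df dg : CD f (g z) df -> CD g z dg -> CD (fun w => f (g w)) z (dg * df)%C.
Proof.
  intros Hf Hg. apply derive_CD'. apply CD_derive' in Hf. apply CD_derive' in Hg.
  exact (is_derive_comp (K:=C_AbsRing) (V:=AbsRing_NormedModule C_AbsRing) f g z df dg Hf Hg).
Qed.

Lemma CD_dext f z d d' : d = d' -> CD f z d -> CD f z d'.
Proof. intros ->; auto. Qed.

Lemma CD_scal c f z df : CD f z df -> CD (fun w => c * f w)%C z (c * df)%C.
Proof.
  intros H. eapply CD_dext; [|apply CD_mult; [apply CD_const|exact H]]. ceq.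
Qed.

Lemma CD_opp f z df : CD f z df -> CD (fun w => - f w)%C z (- df)%C.
Proof.
  intros H. eapply CD_ext; [|eapply CD_dext; [|apply (CD_scal (RtoC (-1))); exact H]].
  intros; ceq. ceq.
Qed.

Lemma CD_minus f g z df dg : CD f z df -> CD g z dg -> CD (fun w => f w - g w)%C z (df - dg)%C.
Proof. intros Hf Hg. apply (CD_plus f (fun w => - g w)%C); auto. apply CD_opp; auto. Qed.

Lemma CD_sum_n (F : nat -> C -> C) (F' : nat -> C) z N :
  (forall k, (k <= N)%nat -> CD (F k) z (F' k)) ->
  CD (fun w => sum_n (fun k => F k w) N) z (sum_n F' N).
Proof.
  induction N; intros H.
  - eapply CD_ext; [|rewrite sum_O; apply (H 0%nat); lia]. intros; rewrite sum_O; auto.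
  - apply (CD_ext (fun w => Cplus (sum_n (fun k => F k w) N) (F (S N) w))).
    intros w. rewrite sum_Sn. reflexivity.
    rewrite sum_Sn. apply (CD_plus (fun w => sum_n (fun k => F k w) N) (F (S N))).
    apply IHN; intros; apply H; lia. apply H; lia.
Qed.

Lemma CD_cexp_comp g z dg : CD g z dg -> CD (fun w => cexp (g w)) z (dg * cexp (g z))%C.
Proof. intros H. apply CD_comp; auto. apply cexp_CD. Qed.

Definition CSeries (a : nat -> C) : C := (Series (fun n => fst (a n)), Series (fun n => snd (a n))).

Lemma sum_n_fst (a : nat -> C) N : fst (sum_n a N) = sum_n (fun n => fst (a n)) N.
Proof. induction N. rewrite !sum_O; auto. rewrite !sum_Sn. cbn -[sum_n]. rewrite <- IHN. reflexivity. Qed.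
Lemma sum_n_snd (a : nat -> C) N : snd (sum_n a N) = sum_n (fun n => snd (a n)) N.
Proof. induction N. rewrite !sum_O; auto. rewrite !sum_Sn. cbn -[sum_n]. rewrite <- IHN. reflexivity. Qed.

Lemma Cser_ball (a : nat -> C) l : is_series a l -> forall eps : posreal,
  exists N, forall n, (N <= n)%nat -> Cmod (sum_n a n - l) < eps.
Proof.
  intros H eps. destruct (proj1 (filterlim_locally_ball_norm (K:=C_AbsRing) (U:=C_NormedModule) (F:=eventually)
    (sum_n a) l) H eps) as [N HN]. exists N. intros n Hn. exact (HN n Hn).
Qed.

Lemma Cser_ball' (a : nat -> C) l : (forall eps : posreal,
  exists N, forall n, (N <= n)%nat -> Cmod (sum_n a n - l) < eps) -> is_series a l.
Proof.
  intros H. apply (proj2 (filterlim_locally_ball_norm (K:=C_AbsRing) (U:=C_NormedModule) (F:=eventually)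
    (sum_n a) l)). intros eps. destruct (H eps) as [N HN]. exists N. exact HN.
Qed.

Lemma Rser_ball (a : nat -> R) l : is_series a l -> forall eps : posreal,
  exists N, forall n, (N <= n)%nat -> Rabs (sum_n a n - l) < eps.
Proof.
  intros H eps. destruct (proj1 (filterlim_locally_ball_norm (K:=R_AbsRing) (U:=R_NormedModule) (F:=eventually)
    (sum_n a) l) H eps) as [N HN]. exists N. intros n Hn. exact (HN n Hn).
Qed.

Lemma Rser_ball' (a : nat -> R) l : (forall eps : posreal,
  exists N, forall n, (N <= n)%nat -> Rabs (sum_n a n - l) < eps) -> is_series a l.
Proof.
  intros H. apply (proj2 (filterlim_locally_ball_norm (K:=R_AbsRing) (U:=R_NormedModule) (F:=eventually)
    (sum_n a) l)). intros eps. destruct (H eps) as [N HN]. exists N. exact HN.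
Qed.

Lemma is_series_C_fst (a : nat -> C) l : is_series a l -> is_series (fun n => fst (a n)) (fst l).
Proof.
  intros H. apply Rser_ball'. intros eps. destruct (Cser_ball a l H eps) as [N HN].
  exists N. intros n Hn. rewrite <- sum_n_fst. eapply Rle_lt_trans; [|exact (HN n Hn)]. apply (re_le_Cmod (sum_n a n - l)%C).
Qed.

Lemma is_series_C_snd (a : nat -> C) l : is_series a l -> is_series (fun n => snd (a n)) (snd l).
Proof.
  intros H. apply Rser_ball'. intros eps. destruct (Cser_ball a l H eps) as [N HN].
  exists N. intros n Hn. rewrite <- sum_n_snd. eapply Rle_lt_trans; [|exact (HN n Hn)]. apply (im_le_Cmod (sum_n a n - l)%C).
Qed.

Lemma Cmod_le_sum (z : C) : Cmod z <= Rabs (fst z) + Rabs (snd z).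
Proof.
  unfold Cmod. rewrite <- (sqrt_Rsqr (Rabs (fst z) + Rabs (snd z))).
  apply sqrt_le_1_alt. pose proof (Rabs_pos (fst z)); pose proof (Rabs_pos (snd z)).
  pose proof (Rsqr_abs (fst z)); pose proof (Rsqr_abs (snd z)). unfold Rsqr in *. nra.
  pose proof (Rabs_pos (fst z)); pose proof (Rabs_pos (snd z)); lra.
Qed.

Lemma is_series_C_join (a : nat -> C) l : is_series (fun n => fst (a n)) (fst l) ->
  is_series (fun n => snd (a n)) (snd l) -> is_series a l.
Proof.
  intros H1 H2. apply Cser_ball'. intros eps.
  assert (He : 0 < eps / 2) by (destruct eps; simpl; lra).
  destruct (Rser_ball _ _ H1 (mkposreal _ He)) as [N1 G1].
  destruct (Rser_ball _ _ H2 (mkposreal _ He)) as [N2 G2].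
  exists (max N1 N2). intros n Hn.
  specialize (G1 n ltac:(lia)). specialize (G2 n ltac:(lia)). simpl in G1, G2.
  eapply Rle_lt_trans. apply Cmod_le_sum.
  cbn [fst snd Cminus Cplus Copp]. rewrite sum_n_fst, sum_n_snd. unfold Rminus in *. lra.
Qed.

Lemma CSeries_correct (a : nat -> C) : ex_series a -> is_series a (CSeries a).
Proof.
  intros [l Hl]. replace (CSeries a) with l. auto.
  unfold CSeries. rewrite (is_series_unique _ _ (is_series_C_fst _ _ Hl)).
  rewrite (is_series_unique _ _ (is_series_C_snd _ _ Hl)). destruct l; auto.
Qed.

Lemma is_series_Cuniq (a : nat -> C) l l' : is_series a l -> is_series a l' -> l = l'.
Proof.
  intros H1 H2. apply injective_projections.
  rewrite <- (is_series_unique _ _ (is_series_C_fst _ _ H1)). apply is_series_unique, is_series_C_fst; auto.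
  rewrite <- (is_series_unique _ _ (is_series_C_snd _ _ H1)). apply is_series_unique, is_series_C_snd; auto.
Qed.

Lemma CSeries_unique (a : nat -> C) l : is_series a l -> CSeries a = l.
Proof. intros H. apply (is_series_Cuniq a); auto. apply CSeries_correct. exists l; auto. Qed.

Lemma sum_n_Cmod (a : nat -> C) b N : (forall n, Cmod (a n) <= b n) -> Cmod (sum_n a N) <= sum_n b N.
Proof.
  intros H. induction N.
  - rewrite !sum_O. auto.
  - rewrite !sum_Sn. eapply Rle_trans. apply Cmod_triangle. apply Rplus_le_compat; auto.
Qed.

Lemma Cseries_norm_le (a : nat -> C) la (b : nat -> R) lb :
  is_series a la -> is_series b lb -> (forall n, Cmod (a n) <= b n) -> Cmod la <= lb.
Proof.
  intros Ha Hb H. apply le_epsilon. intros eps Heps.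
  assert (He2 : 0 < eps / 2) by lra.
  destruct (Cser_ball _ _ Ha (mkposreal _ He2)) as [N1 H1].
  destruct (Rser_ball _ _ Hb (mkposreal _ He2)) as [N2 H2].
  specialize (H1 (max N1 N2) ltac:(lia)). specialize (H2 (max N1 N2) ltac:(lia)). simpl in H1, H2.
  pose proof (sum_n_Cmod a b (max N1 N2) H).
  assert (Cmod la <= Cmod (sum_n a (max N1 N2)) + Cmod (sum_n a (max N1 N2) - la)).
  { replace la with (sum_n a (max N1 N2) - (sum_n a (max N1 N2) - la))%C at 1 by ceq.
    eapply Rle_trans. apply Cmod_triangle. rewrite Cmod_opp. lra. }
  unfold Rabs in H2. destruct (Rcase_abs _); lra.
Qed.

Lemma tail_small (M : nat -> R) : ex_series M -> forall eps, 0 < eps ->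
  exists N, Series M - sum_n M N <= eps.
Proof.
  intros HM eps Heps. pose proof (Series_correct M HM) as H.
  destruct (Rser_ball _ _ H (mkposreal _ Heps)) as [N HN]. exists N. specialize (HN N ltac:(lia)).
  simpl in HN. unfold Rabs in HN. destruct (Rcase_abs _); lra.
Qed.

Lemma is_series_tail (a : nat -> C) l N :
  is_series a l -> is_series (fun k => a (S N + k)%nat) (l - sum_n a N)%C.
Proof.
  intros H. apply is_series_incr_n. lia. simpl.
  match goal with |- is_series _ ?X => replace X with l end. exact H.
  apply injective_projections; cbn -[sum_n]; rewrite ?sum_n_fst, ?sum_n_snd; ring.
Qed.

Lemma is_series_tail_R (a : nat -> R) l N :
  is_series a l -> is_series (fun k => a (S N + k)%nat) (l - sum_n a N).
Proof.
  intros H. apply is_series_incr_n. lia. simpl.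
  match goal with |- is_series _ ?X => replace X with l end. exact H.
  change (l = (l - sum_n a N) + sum_n a N). unfold Rminus. rewrite Rplus_assoc, Rplus_opp_l, Rplus_0_r. reflexivity.
Qed.

Lemma mvt_ball f f' M z del y :
  (forall w, Cmod (w - z) < del -> CD f w (f' w)) ->
  (forall w, Cmod (w - z) < del -> Cmod (f' w) <= M) ->
  Cmod (y - z) < del -> Cmod (f y - f z) <= M * Cmod (y - z).
Proof.
  intros Hd Hb Hy. set (h := (y - z)%C).
  pose proof (cmvt f (fun u => f' (z + RtoC u * h)%C) (fun u => M * Cmod h * u) (fun _ => M * Cmod h)
    z h 0 1 ltac:(lra)) as H.
  assert (Hseg : forall u, 0 <= u <= 1 -> Cmod ((z + RtoC u * h) - z)%C < del).
  { intros u Hu. replace ((z + RtoC u * h) - z)%C with (RtoC u * h)%C by ceq.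
    rewrite Cmod_RtoC_mult. rewrite Rabs_pos_eq by lra. fold h in Hy.
    pose proof (Cmod_ge_0 h). nra. }
  match type of H with ?A -> _ => assert A as HA end.
  { intros u Hu. repeat split.
    - apply Hd. apply Hseg; auto.
    - apply is_derive_Reals. auto_derive; auto. ring.
    - rewrite Cmod_mult. apply Rmult_le_compat_r. apply Cmod_ge_0. apply Hb. apply Hseg; auto. }
  try specialize (H HA). cbv beta in H.
  replace (z + RtoC 1 * h)%C with y in H by (unfold h; ceq).
  replace (z + RtoC 0 * h)%C with z in H by (unfold h; ceq). lra.
Qed.

Lemma is_series_Cminus (a b : nat -> C) la lb : is_series a la -> is_series b lb ->
  is_series (fun n => a n - b n)%C (la - lb)%C.
Proof. intros H1 H2. exact (is_series_minus (K:=C_AbsRing) (V:=C_NormedModule) a b la lb H1 H2). Qed.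

Lemma is_series_Cplus (a b : nat -> C) la lb : is_series a la -> is_series b lb ->
  is_series (fun n => a n + b n)%C (la + lb)%C.
Proof. intros H1 H2. exact (is_series_plus (K:=C_AbsRing) (V:=C_NormedModule) a b la lb H1 H2). Qed.

Lemma is_series_Cscal (c : C) (a : nat -> C) la : is_series a la ->
  is_series (fun n => c * a n)%C (c * la)%C.
Proof. intros H1. exact (is_series_scal_l (K:=C_AbsRing) (V:=C_NormedModule) c a la H1). Qed.

Lemma is_series_Rscal (c : R) (a : nat -> R) la : is_series a la ->
  is_series (fun n => c * a n) (c * la).
Proof. intros H1. exact (is_series_scal_l (K:=R_AbsRing) (V:=R_NormedModule) c a la H1). Qed.

Lemma series_CD (f f' : nat -> C -> C) (M : nat -> R) z del :
  0 < del ->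
  (forall n y, Cmod (y - z) < del -> CD (f n) y (f' n y)) ->
  (forall n y, Cmod (y - z) < del -> Cmod (f' n y) <= M n) ->
  ex_series M ->
  (forall y, Cmod (y - z) < del -> ex_series (fun n => f n y)) ->
  CD (fun y => CSeries (fun n => f n y)) z (CSeries (fun n => f' n z)).
Proof.
  intros Hdel Hd Hb HM Hs eps Heps.
  assert (Hz : Cmod (z - z) < del) by (replace (z - z)%C with (RtoC 0) by ceq; rewrite Cmod_0; lra).
  assert (HM0 : forall n, 0 <= M n).
  { intros n. eapply Rle_trans. apply Cmod_ge_0. apply (Hb n z Hz). }
  destruct (tail_small M HM (eps/4) ltac:(lra)) as [N HN].
  assert (CDP : CD (fun w => sum_n (fun k => f k w) N) z (sum_n (fun k => f' k z) N)).
  { apply (CD_sum_n (fun k w => f k w) (fun k => f' k z)). intros; apply Hd; auto. }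
  destruct (CDP (eps/2) ltac:(lra)) as [d1 [Hd1 HP]].
  exists (Rmin d1 del). split. apply Rmin_glb_lt; auto.
  intros y Hy. set (h := (y - z)%C). fold h in Hy.
  assert (Hy1 : Cmod h < d1) by (pose proof (Rmin_l d1 del); lra).
  assert (Hy2 : Cmod h < del) by (pose proof (Rmin_r d1 del); lra).
  specialize (HP y Hy1).
  assert (Ey := CSeries_correct _ (Hs y Hy2)).
  assert (Ez := CSeries_correct _ (Hs z Hz)).
  assert (Ed : ex_series (fun n => f' n z)).
  { apply (ex_series_le (K:=C_AbsRing) (V:=C_CompleteNormedModule) _ M); [|auto]. intros n; apply (Hb n z Hz). }

  apply CSeries_correct in Ed.
  set (Fy := CSeries (fun n => f n y)) in *. set (Fz := CSeries (fun n => f n z)) in *.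
  set (D := CSeries (fun n => f' n z)) in *.
  apply (is_series_tail _ _ N) in Ey. apply (is_series_tail _ _ N) in Ez.
  apply (is_series_tail _ _ N) in Ed.
  apply (is_series_Cscal h) in Ed.
  pose proof (is_series_Cminus _ _ _ _ (is_series_Cminus _ _ _ _ Ey Ez) Ed) as T.
  set (T0 := ((Fy - sum_n (fun n => f n y) N) - (Fz - sum_n (fun n => f n z) N)
             - h * (D - sum_n (fun n => f' n z) N))%C) in T.
  assert (HT : Cmod T0 <= 2 * Cmod h * (Series M - sum_n M N)).
  { assert (TR : is_series (fun k => 2 * Cmod h * M (S N + k)%nat) (2 * Cmod h * (Series M - sum_n M N))).
    { apply (is_series_Rscal (2 * Cmod h)). apply is_series_tail_R. apply Series_correct; auto. }
    apply (Cseries_norm_le _ _ _ _ T TR).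
    intros k. cbv beta.
    eapply Rle_trans. apply Cmod_triangle. rewrite Cmod_opp, Cmod_mult.
    pose proof (mvt_ball (f (S N + k)%nat) (f' (S N + k)%nat) (M (S N + k)%nat) z del y
       (fun w Hw => Hd _ w Hw) (fun w Hw => Hb _ w Hw) Hy2).
    pose proof (Hb (S N + k)%nat z Hz). fold h in H. pose proof (Cmod_ge_0 h). nra. }
  assert (EQ : (Fy - Fz - D * h)%C =
     ((sum_n (fun k => f k y) N - sum_n (fun k => f k z) N - sum_n (fun k => f' k z) N * h) + T0)%C).
  { unfold T0. ceq. }
  rewrite EQ. eapply Rle_trans. apply Cmod_triangle.
  pose proof (Cmod_ge_0 h).
  replace (y - z)%C with h in HP by reflexivity.
  nra.
Qed.

Definition Ef (s : R) (x : nat) : R := exp (- s * ln (INR x)).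

Lemma ex_series_pos_bounded (a : nat -> R) B : (forall n, 0 <= a n) -> (forall N, sum_n a N <= B) ->
  ex_series a.
Proof.
  intros H0 HB. destruct (ex_finite_lim_seq_incr (sum_n a) B) as [l Hl].
  intros n. rewrite sum_Sn. specialize (H0 (S n)). change plus with Rplus. simpl. lra.
  auto. exists l. exact Hl.
Qed.

Lemma Ef_pos s x : 0 < Ef s x.
Proof. apply exp_pos. Qed.

Lemma ln_INR_ge0 (x : nat) : (1 <= x)%nat -> 0 <= ln (INR x).
Proof. intros H. rewrite <- ln_1. apply ln_le. lra. apply le_INR in H. simpl in H. lra. Qed.

Lemma Ef_mono_s s1 s x : (1 <= x)%nat -> s1 <= s -> Ef s x <= Ef s1 x.
Proof. intros Hx Hs. unfold Ef. apply exp_le. pose proof (ln_INR_ge0 x Hx). nra. Qed.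

Lemma Ef_anti s (x y : nat) : 0 <= s -> (1 <= x)%nat -> (x <= y)%nat -> Ef s y <= Ef s x.
Proof.
  intros Hs Hx Hxy. unfold Ef. apply exp_le.
  assert (ln (INR x) <= ln (INR y)).
  { apply ln_le. apply lt_0_INR; lia. apply le_INR; auto. }
  nra.
Qed.

Lemma Ef_mult s1 s2 x : Ef s1 x * Ef s2 x = Ef (s1 + s2) x.
Proof. unfold Ef. rewrite <- exp_plus. f_equal. ring. Qed.

Lemma ln_Ef_bound s eps (x : nat) : 0 < eps -> (1 <= x)%nat ->
  ln (INR x) * Ef s x <= / eps * Ef (s - eps) x.
Proof.
  intros He Hx. unfold Ef. set (L := ln (INR x)).
  assert (HL : 0 <= L) by (apply ln_INR_ge0; auto).
  assert (H1 : eps * L <= exp (eps * L)).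
  { pose proof (exp_ineq1_le (eps * L)). lra. }
  replace (exp (- (s - eps) * L)) with (exp (eps * L) * exp (- s * L)) by (rewrite <- exp_plus; f_equal; ring).
  pose proof (exp_pos (- s * L)).
  rewrite <- Rmult_assoc. apply Rmult_le_compat_r; [lra|].
  apply Rmult_le_reg_l with eps; auto.
  rewrite <- Rmult_assoc, Rinv_r, Rmult_1_l by lra. lra.
Qed.

Lemma Ef_S_tele p (n : nat) : 1 < p -> (1 <= n)%nat ->
  (p - 1) * Ef p (S n) <= Ef (p - 1) n - Ef (p - 1) (S n).
Proof.
  intros Hp Hn. unfold Ef. rewrite S_INR.
  assert (Hn0 : 1 <= INR n) by (apply le_INR in Hn; simpl in Hn; lra).
  destruct (MVT_cor2 (fun u => exp (- (p - 1) * ln u)) (fun u => - (p-1) * exp (- p * ln u))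
     (INR n) (INR n + 1) ltac:(lra)) as [c [Hc1 Hc2]].
  { intros c Hc. apply is_derive_Reals. auto_derive. lra.
    replace (- p * ln c) with (- (p - 1) * ln c + - ln c) by ring.
    rewrite exp_plus, exp_Ropp, exp_ln by lra. field. lra. }
  assert (exp (- p * ln (INR n + 1)) <= exp (- p * ln c)).
  { apply exp_le. assert (ln c <= ln (INR n + 1)) by (apply ln_le; lra). nra. }
  assert ((p-1) * exp (- p * ln (INR n + 1)) <= (p-1) * exp (- p * ln c)) by (apply Rmult_le_compat_l; lra).
  replace (INR n + 1 - INR n) with 1 in Hc1 by ring. lra.
Qed.

Lemma pseries p : 1 < p -> ex_series (fun n => Ef p (S n)).
Proof.
  intros Hp. apply ex_series_pos_bounded with (B := 1 + / (p - 1)).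
  intros; left; apply Ef_pos.
  assert (Hi : 0 < / (p - 1)) by (apply Rinv_0_lt_compat; lra).
  assert (H : forall N, sum_n (fun n => Ef p (S n)) N <= 1 + (1 - Ef (p - 1) (S N)) / (p - 1)).
  { induction N.
    - rewrite sum_O. unfold Ef. simpl. rewrite ln_1, !Rmult_0_r, exp_0. unfold Rdiv. lra.
    - rewrite sum_Sn. change plus with Rplus. simpl plus.
      pose proof (Ef_S_tele p (S N) Hp ltac:(lia)).
      apply Rle_trans with (1 + (1 - Ef (p - 1) (S N)) / (p - 1) + Ef p (S (S N))).
      simpl in IHN |- *. lra.
      unfold Rdiv. apply Rmult_le_compat_r with (r := / (p - 1)) in H; [|lra].
      rewrite Rmult_comm, <- Rmult_assoc, (Rmult_comm _ (p - 1)), Rinv_r, Rmult_1_l in H by lra.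
      lra. }
  intros N. specialize (H N). pose proof (Ef_pos (p - 1) (S N)).
  assert ((1 - Ef (p - 1) (S N)) / (p - 1) <= / (p - 1)).
  { unfold Rdiv. rewrite <- (Rmult_1_l (/ (p - 1))) at 2. apply Rmult_le_compat_r; lra. }
  lra.
Qed.

Lemma sinc_le (b : nat -> nat) : strictly_increasing_pos b ->
  forall m n, (1 <= m)%nat -> (m <= n)%nat -> (b m + (n - m) <= b n)%nat.
Proof.
  intros Hb m n Hm Hmn. induction n.
  - lia.
  - destruct (Nat.eq_dec m (S n)). subst. lia.
    specialize (IHn ltac:(lia)). specialize (Hb n ltac:(lia)). lia.
Qed.

Lemma sinc_lt_inv (b : nat -> nat) : strictly_increasing_pos b ->
  forall m n, (1 <= m)%nat -> (1 <= n)%nat -> (b m < b n)%nat -> (m < n)%nat.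
Proof.
  intros Hb m n Hm Hn H. destruct (Nat.lt_ge_cases m n); auto.
  pose proof (sinc_le b Hb n m Hn H0). lia.
Qed.

Lemma sinc_inj (b : nat -> nat) : strictly_increasing_pos b ->
  forall m n, (1 <= m)%nat -> (1 <= n)%nat -> b m = b n -> m = n.
Proof.
  intros Hb m n Hm Hn H. destruct (Nat.lt_total m n) as [H1|[H1|H1]]; auto.
  pose proof (sinc_le b Hb m n Hm ltac:(lia)). pose proof (Hb m Hm).
  pose proof (sinc_le b Hb (S m) n ltac:(lia) ltac:(lia)). lia.
  pose proof (sinc_le b Hb (S n) m ltac:(lia) ltac:(lia)). pose proof (Hb n Hn). lia.
Qed.

Lemma sinc_ge (b : nat -> nat) : strictly_increasing_pos b -> (1 <= b 1)%nat ->
  forall n, (1 <= n)%nat -> (n <= b n)%nat.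
Proof. intros Hb H1 n Hn. pose proof (sinc_le b Hb 1 n ltac:(lia) Hn). lia. Qed.

Lemma cpow_cexp b s : cpow_neg b s = cexp (- s * RtoC (ln (INR b)))%C.
Proof.
  unfold cpow_neg, cexp. destruct s as [x y]. cbn.
  replace (- x * ln (INR b) - - y * 0) with (- x * ln (INR b)) by ring.
  replace (- x * 0 + - y * ln (INR b)) with (- (y * ln (INR b))) by ring.
  rewrite cos_neg, sin_neg. f_equal. ring.
Qed.

Lemma Cmod_cpow b s : Cmod (cpow_neg b s) = Ef (fst s) b.
Proof.
  rewrite cpow_cexp, Cmod_cexp. unfold Ef. f_equal. destruct s; cbn. ring.
Qed.

Lemma CD_cpow b s : CD (cpow_neg b) s (RtoC (- ln (INR b)) * cpow_neg b s)%C.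
Proof.
  apply (CD_ext (fun s => cexp (- s * RtoC (ln (INR b)))%C)). intros; rewrite cpow_cexp; auto.
  eapply CD_dext; [|apply CD_cexp_comp].
  2:{ apply (CD_ext (fun w => (RtoC (- ln (INR b)) * w)%C)). intros; ceq.
      apply CD_scal. apply CD_id. }
  rewrite cpow_cexp. ceq.
Qed.

Definition Hol (O : C -> Prop) (f : C -> C) := forall s, O s -> exists d, CD f s d.

Fixpoint rsum (n : nat) (F : nat -> C) : C :=
  match n with O => RtoC 0 | S n => (rsum n F + F n)%C end.

Lemma Hol_plus O f g : Hol O f -> Hol O g -> Hol O (fun s => f s + g s)%C.
Proof. intros Hf Hg s Hs. destruct (Hf s Hs), (Hg s Hs). eexists; apply CD_plus; eauto. Qed.

Lemma Hol_scal O c f : Hol O f -> Hol O (fun s => c * f s)%C.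
Proof. intros Hf s Hs. destruct (Hf s Hs). eexists; apply CD_scal; eauto. Qed.

Lemma Hol_const O c : Hol O (fun _ => c).
Proof. intros s Hs. eexists; apply CD_const. Qed.

Lemma Hol_rsum O n (F : nat -> C -> C) : (forall k, (k < n)%nat -> Hol O (F k)) ->
  Hol O (fun s => rsum n (fun k => F k s)).
Proof.
  induction n; intros H.
  - intros s Hs. exists (RtoC 0). apply (CD_const (RtoC 0)).
  - simpl. apply (Hol_plus O (fun s => rsum n (fun k => F k s)) (F n)).
    apply IHn; intros; apply H; lia. apply H; lia.
Qed.

Lemma Hol_cexp O f : Hol O f -> Hol O (fun s => cexp (f s)).
Proof. intros Hf s Hs. destruct (Hf s Hs). eexists; apply CD_cexp_comp; eauto. Qed.

Lemma Hol_mono O O' f : (forall s, O' s -> O s) -> Hol O f -> Hol O' f.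
Proof. intros H Hf s Hs. apply Hf, H, Hs. Qed.

Lemma Re_close (y s : C) : fst s - Cmod (y - s) <= fst y.
Proof. pose proof (re_le_Cmod (y - s)%C). cbn in H. unfold Rabs in H. destruct (Rcase_abs _); lra. Qed.

Lemma dirichlet_hol (c : nat -> nat) th : 0 <= th -> (forall n, (1 <= c n)%nat) ->
  (forall sg, th < sg -> ex_series (fun n => ln (INR (c n)) * Ef sg (c n))) ->
  (forall sg, th < sg -> ex_series (fun n => Ef sg (c n))) ->
  (forall s, th < fst s -> ex_series (fun n => cpow_neg (c n) s)) /\
  Hol (fun s => th < fst s) (fun s => CSeries (fun n => cpow_neg (c n) s)).
Proof.
  intros Hth Hc Hl HE.
  assert (Hex : forall s, th < fst s -> ex_series (fun n => cpow_neg (c n) s)).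
  { intros s Hs. apply (ex_series_le (K:=C_AbsRing) (V:=C_CompleteNormedModule) _ (fun n => Ef (fst s) (c n))).
    intros n. change (Cmod (cpow_neg (c n) s) <= Ef (fst s) (c n)). rewrite Cmod_cpow. lra.
    apply HE; auto. }
  split; auto.
  intros s Hs. set (del := (fst s - th) / 2).
  eexists. apply (series_CD _ (fun n s => RtoC (- ln (INR (c n))) * cpow_neg (c n) s)%C
    (fun n => ln (INR (c n)) * Ef (fst s - del) (c n)) s del).
  - unfold del; lra.
  - intros n y Hy. apply CD_cpow.
  - intros n y Hy. rewrite Cmod_mult, Cmod_cpow, Cmod_R. rewrite Rabs_Ropp, Rabs_pos_eq
      by (apply ln_INR_ge0; auto). apply Rmult_le_compat_l. apply ln_INR_ge0; auto.
    apply Ef_mono_s; auto. pose proof (Re_close y s). lra.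
  - apply Hl. unfold del; lra.
  - intros y Hy. apply Hex. pose proof (Re_close y s). unfold del in *; lra.
Qed.

Fixpoint cpw (w : C) (k : nat) : C := match k with O => RtoC 1 | S k => (w * cpw w k)%C end.

Lemma Cmod_cpw w k : Cmod (cpw w k) = Cmod w ^ k.
Proof. induction k; simpl. apply Cmod_1. rewrite Cmod_mult, IHk. ring. Qed.

Lemma CD_cpw k w : CD (fun w => cpw w (S k)) w (RtoC (INR (S k)) * cpw w k)%C.
Proof.
  induction k.
  - simpl. eapply CD_ext. intros y; symmetry; apply Cmult_1_r.
    eapply CD_dext; [|apply CD_id]. ceq.
  - change (CD (fun w => w * cpw w (S k))%C w (RtoC (INR (S (S k))) * cpw w (S k))%C).
    eapply CD_dext; [|apply CD_mult; [apply CD_id|exact IHk]].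
    change (cpw w (S k)) with (w * cpw w k)%C. rewrite !S_INR. ceq.
Qed.

Lemma Cmod_sub_ge (a b : C) : Cmod a - Cmod b <= Cmod (a - b).
Proof.
  pose proof (Cmod_triangle (a - b) b). replace (a - b + b)%C with a in H by ceq. lra.
Qed.

Definition Lterm (k : nat) (w : C) : C := (RtoC (/ INR (S k)) * cpw w (S k))%C.
Definition Lf (w : C) : C := CSeries (fun k => Lterm k w).

Lemma Cmod_Lterm k w : Cmod (Lterm k w) <= Cmod w ^ (S k).
Proof.
  unfold Lterm. rewrite Cmod_mult, Cmod_R, Cmod_cpw.
  rewrite Rabs_pos_eq by (left; apply Rinv_0_lt_compat, lt_0_INR; lia).
  assert (/ INR (S k) <= 1).
  { rewrite S_INR. pose proof (pos_INR k). rewrite <- Rinv_1. apply Rinv_le_contravar; lra. }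
  pose proof (pow_le (Cmod w) (S k) (Cmod_ge_0 w)). nra.
Qed.

Lemma geom_sum w N : (sum_n (cpw w) N * (RtoC 1 - w))%C = (RtoC 1 - cpw w (S N))%C.
Proof.
  induction N.
  - rewrite sum_O. simpl. ceq.
  - rewrite sum_Sn. change plus with Cplus.
    change (cpw w (S (S N))) with (w * cpw w (S N))%C.
    revert IHN. generalize (sum_n (cpw w) N) (cpw w (S N)). intros a b H.
    replace ((a + b) * (RtoC 1 - w))%C with (a * (RtoC 1 - w) + b * (RtoC 1 - w))%C by ceq.
    rewrite H. ceq.
Qed.

Lemma one_minus_neq0 w : Cmod w < 1 -> (RtoC 1 - w)%C <> RtoC 0.
Proof.
  intros H E. pose proof (Cmod_sub_ge (RtoC 1) w). rewrite E, Cmod_0, Cmod_1 in H0. lra.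
Qed.

Lemma Cmult_reg_r a b c : c <> RtoC 0 -> (a * c = b * c)%C -> a = b.
Proof.
  intros Hc H. rewrite <- (Cmult_1_r a), <- (Cmult_1_r b), <- (Cinv_r c Hc), !Cmult_assoc, H. reflexivity.
Qed.

Lemma geom_C w : Cmod w < 1 -> is_series (cpw w) (/ (RtoC 1 - w))%C.
Proof.
  intros Hw. apply Cser_ball'. intros eps.
  assert (Hn := one_minus_neq0 w Hw).
  assert (Hd : 0 < Cmod (RtoC 1 - w)) by (apply Cmod_gt_0; auto).
  destruct (pow_lt_1_zero (Cmod w) ltac:(rewrite Rabs_pos_eq by apply Cmod_ge_0; auto)
     (eps * Cmod (RtoC 1 - w)) ltac:(destruct eps; simpl; nra)) as [N HN].
  exists N. intros n Hn'.
  assert (E : (sum_n (cpw w) n - / (RtoC 1 - w))%C = (- cpw w (S n) / (RtoC 1 - w))%C).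
  { apply (Cmult_reg_r _ _ (RtoC 1 - w)); auto.
    unfold Cdiv. rewrite <- Cmult_assoc, Cinv_l by auto. rewrite Cmult_1_r.
    replace ((sum_n (cpw w) n - / (RtoC 1 - w)) * (RtoC 1 - w))%C with
      (sum_n (cpw w) n * (RtoC 1 - w) - / (RtoC 1 - w) * (RtoC 1 - w))%C by ceq.
    rewrite geom_sum, Cinv_l by auto. ceq. }
  rewrite E. rewrite Cmod_div by auto. rewrite Cmod_opp, Cmod_cpw.
  specialize (HN (S n) ltac:(lia)). rewrite Rabs_pos_eq in HN by (apply pow_le, Cmod_ge_0).
  apply Rmult_lt_reg_r with (Cmod (RtoC 1 - w)); auto. unfold Rdiv.
  rewrite Rmult_assoc, Rinv_l, Rmult_1_r by lra. lra.
Qed.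

Lemma Lf_CD w : Cmod w < 1 -> ex_series (fun k => Lterm k w) /\ CD Lf w (CSeries (cpw w)).
Proof.
  intros Hw.
  assert (Hex : forall y, Cmod y < 1 -> ex_series (fun k => Lterm k y)).
  { intros y Hy. apply (ex_series_le (K:=C_AbsRing) (V:=C_CompleteNormedModule) _ (fun k => Cmod y ^ k)).
    intros k. change (Cmod (Lterm k y) <= Cmod y ^ k). eapply Rle_trans. apply Cmod_Lterm.
    simpl. pose proof (pow_le (Cmod y) k (Cmod_ge_0 y)). pose proof (Cmod_ge_0 y).
    assert (Cmod y ^ k * Cmod y <= Cmod y ^ k * 1) by (apply Rmult_le_compat_l; lra). lra.
    exists (/ (1 - Cmod y)). apply is_series_geom. rewrite Rabs_pos_eq by apply Cmod_ge_0; auto. }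
  split; auto.
  set (del := (1 - Cmod w) / 2).
  assert (Hdel : 0 < del) by (unfold del; lra).
  set (r := Cmod w + del).
  assert (Hball : forall y, Cmod (y - w) < del -> Cmod y < r).
  { intros y Hy. pose proof (Cmod_triangle (y - w) w). replace (y - w + w)%C with y in H by ceq. unfold r; lra. }
  apply (series_CD Lterm (fun k y => cpw y k) (fun k => r ^ k) w del Hdel).
  - intros n y Hy. unfold Lterm. pose proof (CD_scal (RtoC (/ INR (S n))) _ _ _ (CD_cpw n y)) as H.
    eapply CD_dext; [|exact H]. rewrite Cmult_assoc, <- RtoC_mult, Rinv_l.
    ceq. apply not_0_INR; lia.
  - intros n y Hy. rewrite Cmod_cpw. apply pow_incr. split. apply Cmod_ge_0. left; apply Hball; auto.
  - exists (/ (1 - r)). apply is_series_geom. rewrite Rabs_pos_eq; unfold r, del in *.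
    lra. pose proof (Cmod_ge_0 w); lra.
  - intros y Hy. apply Hex. pose proof (Hball y Hy). unfold r, del in *. lra.
Qed.

Lemma Lf_0 : Lf (RtoC 0) = RtoC 0.
Proof.
  unfold Lf. apply CSeries_unique. apply Cser_ball'. intros eps. exists O. intros n _.
  assert (E : sum_n (fun k => Lterm k (RtoC 0)) n = RtoC 0).
  { induction n. rewrite sum_O. unfold Lterm. simpl. ceq.
    rewrite sum_Sn, IHn. unfold Lterm. simpl. ceq. }
  rewrite E. replace (RtoC 0 - RtoC 0)%C with (RtoC 0) by ceq. rewrite Cmod_0. apply cond_pos.
Qed.

Lemma Lf_exp w : Cmod w < 1 -> (cexp (Lf w) * (RtoC 1 - w))%C = RtoC 1.
Proof.
  intros Hw.
  set (Phi := fun y => ((RtoC 1 - y) * cexp (Lf y))%C).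
  assert (HD : forall y, Cmod (y - RtoC 0) < 1 -> CD Phi y (RtoC 0)).
  { intros y Hy. replace (y - RtoC 0)%C with y in Hy by ceq.
    destruct (Lf_CD y Hy) as [_ H].
    assert (Hg := geom_C y Hy). rewrite (CSeries_unique _ _ Hg) in H.
    unfold Phi. eapply CD_dext; [|apply CD_mult; [apply CD_minus; [apply CD_const|apply CD_id]|apply CD_cexp_comp; exact H]].
    replace ((RtoC 1 - y) * (/ (RtoC 1 - y) * cexp (Lf y)))%C with
      (((RtoC 1 - y) * / (RtoC 1 - y)) * cexp (Lf y))%C by ceq.
    rewrite Cinv_r by (apply one_minus_neq0; auto). ceq. }
  pose proof (mvt_ball Phi (fun _ => RtoC 0) 0 (RtoC 0) 1 w HD) as H.
  assert (Hw' : Cmod (w - RtoC 0) < 1) by (replace (w - RtoC 0)%C with w by ceq; auto).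
  specialize (H ltac:(intros; cbv beta; rewrite Cmod_0; lra) Hw').
  rewrite Rmult_0_l in H.
  assert (E : (Phi w - Phi (RtoC 0))%C = RtoC 0).
  { apply Cmod_eq_0. pose proof (Cmod_ge_0 (Phi w - Phi (RtoC 0))%C). lra. }
  unfold Phi in E. rewrite Lf_0, cexp_0 in E.
  rewrite Cmult_comm. replace (RtoC 1) with ((RtoC 1 - RtoC 0) * RtoC 1)%C at 2 by ceq.
  replace ((RtoC 1 - w) * cexp (Lf w))%C with
    (((RtoC 1 - w) * cexp (Lf w) - (RtoC 1 - RtoC 0) * RtoC 1) + (RtoC 1 - RtoC 0) * RtoC 1)%C by ceq.
  rewrite E. ceq.
Qed.

Lemma ex_series_R_le (a b : nat -> R) : (forall n, 0 <= a n <= b n) -> ex_series b -> ex_series a.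
Proof.
  intros H Hb. apply (ex_series_le (K:=R_AbsRing) (V:=R_CompleteNormedModule) a b); auto.
  intros n. change (Rabs (a n) <= b n). rewrite Rabs_pos_eq; apply H.
Qed.

Lemma ex_series_tail_R (a : nat -> R) N : ex_series (fun k => a (N + k)%nat) -> ex_series a.
Proof. intros H. apply (ex_series_incr_n a N). exact H. Qed.

Lemma lin_series (c : nat -> nat) : (forall n, (S n <= c n)%nat) ->
  forall p, 1 < p -> ex_series (fun n => Ef p (c n)) /\ ex_series (fun n => ln (INR (c n)) * Ef p (c n)).
Proof.
  intros Hc p Hp.
  assert (A : forall q, 1 < q -> ex_series (fun n => Ef q (c n))).
  { intros q Hq. apply (ex_series_R_le _ (fun n => Ef q (S n))). intros n. split. left; apply Ef_pos.
    specialize (Hc n). apply Ef_anti; [lra|lia|lia]. apply pseries; auto. }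
  split; auto.
  apply (ex_series_R_le _ (fun n => / ((p - 1)/2) * Ef (p - (p - 1)/2) (c n))).
  intros n. split. apply Rmult_le_pos. apply ln_INR_ge0. specialize (Hc n); lia. left; apply Ef_pos.
  apply ln_Ef_bound. lra. specialize (Hc n); lia.
  apply (ex_series_scal (K:=R_AbsRing) (V:=R_NormedModule)). apply A. lra.
Qed.

Lemma quad_series (c : nat -> nat) (kap : R) N0 : 0 < kap -> (forall n, (1 <= c n)%nat) ->
  (forall n, (N0 <= n)%nat -> kap * INR (S n) ^ 2 <= INR (c n)) ->
  forall sg, 1/2 < sg -> ex_series (fun n => Ef sg (c n)) /\ ex_series (fun n => ln (INR (c n)) * Ef sg (c n)).
Proof.
  intros Hk Hc1 Hc sg Hsg.
  assert (A : forall q, 1/2 < q -> ex_series (fun n => Ef q (c n))).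
  { intros q Hq. apply (ex_series_tail_R _ N0).
    apply (ex_series_R_le _ (fun n => exp (- q * ln kap) * Ef (2 * q) (S (N0 + n)))).
    intros n. split. left; apply Ef_pos.
    specialize (Hc (N0 + n)%nat ltac:(lia)).
    unfold Ef. rewrite <- exp_plus. apply exp_le.
    assert (HS : 0 < INR (S (N0 + n))) by (apply lt_0_INR; lia).
    assert (ln (kap * INR (S (N0 + n)) ^ 2) <= ln (INR (c (N0 + n)%nat))).
    { apply ln_le. apply Rmult_lt_0_compat; auto. apply pow_lt; auto. auto. }
    rewrite ln_mult, ln_pow in H by (auto; apply pow_lt; auto).
    replace (INR 2) with 2 in H by (simpl; ring).
    apply Rmult_le_compat_l with (r := q) in H; lra.
    apply (ex_series_scal (K:=R_AbsRing) (V:=R_NormedModule)).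
    apply (ex_series_incr_n (fun n => Ef (2 * q) (S n)) N0). apply pseries. lra. }
  split; auto.
  apply (ex_series_R_le _ (fun n => / ((sg - 1/2)/2) * Ef (sg - (sg - 1/2)/2) (c n))).
  intros n. split. apply Rmult_le_pos. apply ln_INR_ge0. auto. left; apply Ef_pos.
  apply ln_Ef_bound. lra. auto.
  apply (ex_series_scal (K:=R_AbsRing) (V:=R_NormedModule)). apply A. lra.
Qed.

Definition Lgc (b : nat) (s : C) : C := (Lf (cpow_neg b s) - cpow_neg b s)%C.

Lemma Ef_lt1 sg (b : nat) : (2 <= b)%nat -> 0 < sg -> Ef sg b < 1.
Proof.
  intros Hb Hs. unfold Ef. rewrite <- exp_0. apply exp_increasing.
  assert (0 < ln (INR b)). { rewrite <- ln_1. apply ln_increasing. lra. apply le_INR in Hb. simpl in Hb. lra. }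
  nra.
Qed.

Lemma Lg_bound w : Cmod w < 1 -> Cmod (Lf w - w) <= Cmod w ^ 2 / (1 - Cmod w).
Proof.
  intros Hw. destruct (Lf_CD w Hw) as [Hex _].
  apply CSeries_correct in Hex. apply (is_series_tail _ _ 0) in Hex.
  rewrite sum_O in Hex. replace (Lterm 0 w) with w in Hex by (unfold Lterm; simpl INR; rewrite Rinv_1; ceq).
  assert (G : is_series (fun k => Cmod w ^ 2 * Cmod w ^ k) (Cmod w ^ 2 / (1 - Cmod w))).
  { unfold Rdiv. apply is_series_Rscal. apply is_series_geom. rewrite Rabs_pos_eq by apply Cmod_ge_0. auto. }
  apply (Cseries_norm_le _ _ _ _ Hex G).
  intros k. eapply Rle_trans. apply Cmod_Lterm. rewrite <- pow_add. simpl; lra.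
Qed.

Lemma geo_m1_bound w : Cmod w < 1 -> Cmod (/ (RtoC 1 - w) - RtoC 1) <= Cmod w / (1 - Cmod w).
Proof.
  intros Hw. assert (Hn := one_minus_neq0 w Hw).
  replace (/ (RtoC 1 - w) - RtoC 1)%C with (w / (RtoC 1 - w))%C.
  2:{ apply (Cmult_reg_r _ _ (RtoC 1 - w)); auto. unfold Cdiv.
      replace ((/ (RtoC 1 - w) - RtoC 1) * (RtoC 1 - w))%C with (/ (RtoC 1 - w) * (RtoC 1 - w) - (RtoC 1 - w))%C by ceq.
      rewrite <- Cmult_assoc, !Cinv_l by auto. ceq. }
  rewrite Cmod_div by auto. pose proof (Cmod_sub_ge (RtoC 1) w). rewrite Cmod_1 in H.
  unfold Rdiv. apply Rmult_le_compat_l. apply Cmod_ge_0. apply Rinv_le_contravar; lra.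
Qed.

Lemma CD_Lgc b s : (2 <= b)%nat -> 0 < fst s ->
  CD (Lgc b) s ((RtoC (- ln (INR b)) * cpow_neg b s) * (/ (RtoC 1 - cpow_neg b s) - RtoC 1))%C.
Proof.
  intros Hb Hs. assert (Hw : Cmod (cpow_neg b s) < 1) by (rewrite Cmod_cpow; apply Ef_lt1; auto).
  unfold Lgc. eapply CD_dext; [|apply CD_minus; [apply (CD_comp Lf (cpow_neg b))|apply CD_cpow]].
  2:{ destruct (Lf_CD _ Hw) as [_ H]. exact H. }
  2:{ apply CD_cpow. }
  rewrite (CSeries_unique _ _ (geom_C _ Hw)). ceq.
Qed.

Lemma T4 (c : nat -> nat) : (forall n, (2 <= c n)%nat) -> (forall n, (S n <= c n)%nat) ->
  (forall s, 1/2 < fst s -> ex_series (fun n => Lgc (c n) s)) /\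
  Hol (fun s => 1/2 < fst s) (fun s => CSeries (fun n => Lgc (c n) s)).
Proof.
  intros Hc2 Hc.
  assert (Bnd : forall sg n (y : C), 0 < sg -> sg <= fst y ->
     Cmod (Lgc (c n) y) <= Ef (2 * sg) (c n) / (1 - Ef sg 2) /\
     Cmod ((RtoC (- ln (INR (c n))) * cpow_neg (c n) y) * (/ (RtoC 1 - cpow_neg (c n) y) - RtoC 1))%C
       <= ln (INR (c n)) * Ef (2 * sg) (c n) / (1 - Ef sg 2)).
  { intros sg n y Hsg Hy.
    assert (H1 : Cmod (cpow_neg (c n) y) <= Ef sg (c n)).
    { rewrite Cmod_cpow. apply Ef_mono_s; auto. specialize (Hc2 n); lia. }
    assert (H2 : Ef sg (c n) <= Ef sg 2) by (apply Ef_anti; [lra|lia|apply Hc2]).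
    assert (H3 : Ef sg 2 < 1) by (apply Ef_lt1; auto).
    assert (Hw : Cmod (cpow_neg (c n) y) < 1) by lra.
    assert (H0 : 0 <= Cmod (cpow_neg (c n) y)) by apply Cmod_ge_0.
    assert (HE : Ef sg (c n) ^ 2 = Ef (2 * sg) (c n)) by (simpl; rewrite Rmult_1_r, Ef_mult; f_equal; ring).
    assert (Hq : Cmod (cpow_neg (c n) y) ^ 2 / (1 - Cmod (cpow_neg (c n) y)) <= Ef (2 * sg) (c n) / (1 - Ef sg 2)).
    { rewrite <- HE. unfold Rdiv. apply Rmult_le_compat. apply pow_le; auto.
      left; apply Rinv_0_lt_compat; lra. apply pow_incr; auto. apply Rinv_le_contravar; lra. }
    split.
    - unfold Lgc. eapply Rle_trans. apply Lg_bound; auto. auto.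
    - rewrite !Cmod_mult, Cmod_R, Rabs_Ropp, Rabs_pos_eq by (apply ln_INR_ge0; specialize (Hc2 n); lia).
      pose proof (geo_m1_bound _ Hw). pose proof (ln_INR_ge0 (c n) ltac:(specialize (Hc2 n); lia)).
      rewrite Rmult_assoc. unfold Rdiv. rewrite Rmult_assoc. apply Rmult_le_compat_l; auto.
      eapply Rle_trans. apply Rmult_le_compat_l. apply Cmod_ge_0. exact H.
      unfold Rdiv in Hq. eapply Rle_trans; [|exact Hq]. apply Req_le. unfold Rdiv. simpl. ring. }
  assert (PW : forall s, 1/2 < fst s -> ex_series (fun n => Lgc (c n) s)).
  { intros s Hs. apply (ex_series_le (K:=C_AbsRing) (V:=C_CompleteNormedModule) _
      (fun n => Ef (2 * fst s) (c n) / (1 - Ef (fst s) 2))).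
    intros n. exact (proj1 (Bnd (fst s) n s ltac:(lra) ltac:(lra))).
    apply (ex_series_ext (fun n => / (1 - Ef (fst s) 2) * Ef (2 * fst s) (c n))).
    intros n; apply Rmult_comm.
    apply (ex_series_scal (K:=R_AbsRing) (V:=R_NormedModule)). exact (proj1 (lin_series c Hc (2 * fst s) ltac:(lra))). }
  split; auto.
  - intros s Hs. set (del := (fst s - 1/2) / 2). set (sg := fst s - del).
    eexists. apply (series_CD (fun n => Lgc (c n))
      (fun n y => (RtoC (- ln (INR (c n))) * cpow_neg (c n) y) * (/ (RtoC 1 - cpow_neg (c n) y) - RtoC 1))%C
      (fun n => ln (INR (c n)) * Ef (2 * sg) (c n) / (1 - Ef sg 2)) s del).
    + unfold del; lra.
    + intros n y Hy. apply CD_Lgc. apply Hc2. pose proof (Re_close y s). unfold del in *; lra.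
    + intros n y Hy. pose proof (Re_close y s). exact (proj2 (Bnd sg n y ltac:(unfold sg, del; lra) ltac:(unfold sg; lra))).
    + apply (ex_series_ext (fun n => / (1 - Ef sg 2) * (ln (INR (c n)) * Ef (2 * sg) (c n)))).
      intros n; apply Rmult_comm.
      apply (ex_series_scal (K:=R_AbsRing) (V:=R_NormedModule)). exact (proj2 (lin_series c Hc (2 * sg) ltac:(unfold sg, del; lra))).
    + intros y Hy. apply PW. pose proof (Re_close y s). unfold del in *; lra.
Qed.

Lemma ln_le_nat (b c : nat) : (1 <= b)%nat -> (b <= c)%nat -> ln (INR b) <= ln (INR c).
Proof. intros H1 H2. apply ln_le. apply lt_0_INR; lia. apply le_INR; auto. Qed.

Lemma fst_line (u : R) (s : C) : fst (RtoC 0 + RtoC u * (- s))%C = - fst s * u.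
Proof. destruct s; cbn. ring. Qed.

Lemma diff_bound (b c : nat) s : (1 <= b)%nat -> (b <= c)%nat -> 0 < fst s ->
  Cmod (cpow_neg c s - cpow_neg b s) <= Cmod s / fst s * (Ef (fst s) b - Ef (fst s) c).
Proof.
  intros Hb Hbc Hs. set (sg := fst s) in *.
  pose proof (cmvt cexp (fun u => cexp (RtoC 0 + RtoC u * (- s)))%C
    (fun u => - (Cmod s / sg) * exp (- sg * u)) (fun u => Cmod s * exp (- sg * u))
    (RtoC 0) (- s)%C (ln (INR b)) (ln (INR c)) (ln_le_nat b c Hb Hbc)) as H.
  match type of H with ?A -> _ => assert A as HA end.
  { intros u Hu. repeat split.
    - apply cexp_CD.
    - apply is_derive_Reals. auto_derive. { auto. } field. lra.
    - rewrite Cmod_mult, Cmod_cexp, Cmod_opp, fst_line. fold sg. right.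
      rewrite Rmult_comm; repeat f_equal; ring. }
  try specialize (H HA). cbv beta in H.
  rewrite !cpow_cexp.
  replace (- s * RtoC (ln (INR c)))%C with (RtoC 0 + RtoC (ln (INR c)) * (- s))%C by ceq.
  replace (- s * RtoC (ln (INR b)))%C with (RtoC 0 + RtoC (ln (INR b)) * (- s))%C by ceq.
  eapply Rle_trans. exact H. unfold Ef. right.
  replace (- sg * ln (INR b)) with (- sg * ln (INR b)) by ring. ring.
Qed.

Lemma exp_poly_bound u s2 R0 : 0 <= u -> 0 < s2 -> 0 <= R0 ->
  exp (- (2 * s2) * u) * (1 + R0 * u) <= (1 + R0 / s2) * exp (- s2 * u).
Proof.
  intros Hu Hs HR.
  replace (exp (- (2 * s2) * u)) with (exp (- s2 * u) * exp (- s2 * u)) by (rewrite <- exp_plus; f_equal; ring).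
  assert (E1 : exp (s2 * u) * exp (- s2 * u) = 1) by (rewrite <- exp_plus; replace (s2 * u + - s2 * u) with 0 by ring; apply exp_0).
  pose proof (exp_ineq1_le (s2 * u)). pose proof (exp_pos (- s2 * u)).
  assert (Hk : 1 + R0 * u <= (1 + R0 / s2) * exp (s2 * u)).
  { apply Rle_trans with ((1 + R0 / s2) * (1 + s2 * u)).
    assert (0 <= R0 / s2) by (apply Rdiv_le_0_compat; lra).
    replace ((1 + R0 / s2) * (1 + s2 * u)) with (1 + s2 * u + R0 / s2 + R0 * u) by (field; lra). nra.
    apply Rmult_le_compat_l. assert (0 <= R0 / s2) by (apply Rdiv_le_0_compat; lra). lra. lra. }
  rewrite Rmult_assoc. rewrite (Rmult_comm (1 + R0 / s2)). apply Rmult_le_compat_l. lra.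
  apply Rmult_le_reg_l with (exp (s2 * u)). apply exp_pos.
  rewrite <- Rmult_assoc, E1, Rmult_1_l. nra.
Qed.

Definition fg (s : C) (w : C) : C := (w * cexp (w * (- s)))%C.

Lemma CD_fg s w : CD (fg s) w (cexp (w * - s) + w * ((- s) * cexp (w * - s)))%C.
Proof.
  unfold fg. eapply CD_dext; [|apply CD_mult; [apply CD_id|apply CD_cexp_comp]].
  2:{ apply (CD_ext (fun w => (- s) * w)%C). intros; ceq. apply CD_scal, CD_id. }
  cbv beta. generalize (cexp (w * - s)%C). intros e. ceq.
Qed.

Lemma deriv_bound (b c : nat) s sg1 R0 : (1 <= b)%nat -> (b <= c)%nat -> 0 < sg1 -> sg1 <= fst s ->
  Cmod s <= R0 ->
  Cmod (RtoC (- ln (INR c)) * cpow_neg c s - RtoC (- ln (INR b)) * cpow_neg b s)%C <=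
    (1 + R0 / (sg1/2)) / (sg1/2) * (Ef (sg1/2) b - Ef (sg1/2) c).
Proof.
  intros Hb Hbc Hs1 Hs HR. set (s2 := sg1 / 2). set (K := (1 + R0 / s2) / s2).
  assert (Hs2 : 0 < s2) by (unfold s2; lra).
  assert (HR0 : 0 <= R0) by (pose proof (Cmod_ge_0 s); lra).
  pose proof (cmvt (fg s) (fun u => cexp (RtoC u * - s) + RtoC u * ((- s) * cexp (RtoC u * - s)))%C
    (fun u => - K * exp (- s2 * u)) (fun u => K * s2 * exp (- s2 * u))
    (RtoC 0) (RtoC 1) (ln (INR b)) (ln (INR c)) (ln_le_nat b c Hb Hbc)) as H.
  match type of H with ?A -> _ => assert A as HA end.
  { intros u Hu. assert (Hu0 : 0 <= u) by (pose proof (ln_INR_ge0 b Hb); lra). repeat split.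
    - replace (RtoC 0 + RtoC u * RtoC 1)%C with (RtoC u) by ceq. apply CD_fg.
    - apply is_derive_Reals. auto_derive. { auto. } unfold K; field. lra.
    - replace ((cexp (RtoC u * - s) + RtoC u * (- s * cexp (RtoC u * - s))) * RtoC 1)%C
        with (cexp (RtoC u * - s) * (RtoC 1 - RtoC u * s))%C by (generalize (cexp (RtoC u * - s)); intros; ceq).
      rewrite Cmod_mult, Cmod_cexp.
      assert (F : fst (RtoC u * - s)%C = - fst s * u) by (destruct s; cbn; ring). rewrite F.
      assert (C1 : Cmod (RtoC 1 - RtoC u * s) <= 1 + R0 * u).
      { eapply Rle_trans. apply Cmod_triangle. rewrite Cmod_opp, Cmod_1, Cmod_mult, Cmod_R, Rabs_pos_eq by auto. nra. }
      assert (C2 : exp (- fst s * u) <= exp (- (2 * s2) * u)) by (apply exp_le; unfold s2; nra).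
      pose proof (exp_poly_bound u s2 R0 Hu0 Hs2 HR0) as Hpb.
      replace (K * s2 * exp (- s2 * u)) with ((1 + R0 / s2) * exp (- s2 * u)) by (unfold K; field; lra).
      eapply Rle_trans; [|exact Hpb]. apply Rmult_le_compat. left; apply exp_pos. apply Cmod_ge_0. auto. auto. }
  try specialize (H HA). cbv beta in H.
  replace (RtoC 0 + RtoC (ln (INR c)) * RtoC 1)%C with (RtoC (ln (INR c))) in H by ceq.
  replace (RtoC 0 + RtoC (ln (INR b)) * RtoC 1)%C with (RtoC (ln (INR b))) in H by ceq.
  unfold fg in H. rewrite !cpow_cexp.
  replace (RtoC (- ln (INR c)) * cexp (- s * RtoC (ln (INR c))) - RtoC (- ln (INR b)) * cexp (- s * RtoC (ln (INR b))))%C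
    with (- (RtoC (ln (INR c)) * cexp (RtoC (ln (INR c)) * - s) - RtoC (ln (INR b)) * cexp (RtoC (ln (INR b)) * - s)))%C.
  2:{ replace (RtoC (ln (INR c)) * - s)%C with (- s * RtoC (ln (INR c)))%C by ceq.
      replace (RtoC (ln (INR b)) * - s)%C with (- s * RtoC (ln (INR b)))%C by ceq.
      generalize (cexp (- s * RtoC (ln (INR c)))%C) (cexp (- s * RtoC (ln (INR b)))%C). intros; ceq. }
  rewrite Cmod_opp. eapply Rle_trans. exact H. fold s2. fold K. unfold Ef. right.
  replace (- s2 * ln (INR b)) with (- s2 * ln (INR b)) by ring. ring.
Qed.

Lemma tele_ex (t y : nat -> R) : (forall n, 0 <= t n <= y n - y (S n)) -> (forall n, 0 <= y n) ->
  ex_series t.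
Proof.
  intros H Hy. apply ex_series_pos_bounded with (B := y O). intros n; apply H.
  assert (forall N, sum_n t N <= y O - y (S N)).
  { induction N. rewrite sum_O. apply H. rewrite sum_Sn. change plus with Rplus. simpl.
    specialize (H (S N)). simpl in IHN. lra. }
  intros N. specialize (H0 N). specialize (Hy (S N)). lra.
Qed.

Lemma Cmod_le_ball (y s : C) : Cmod y <= Cmod s + Cmod (y - s).
Proof. pose proof (Cmod_triangle s (y - s)). replace (s + (y - s))%C with y in H by ceq. lra. Qed.

Section T3.
Variable at_ : nat -> nat.
Variables Q P r : nat.
Hypothesis Hsinc : strictly_increasing_pos at_.
Hypothesis Hpos : forall k, (1 <= k)%nat -> (1 <= at_ k)%nat.
Hypothesis HQ : (1 <= Q)%nat.
Hypothesis Hr : (r < Q)%nat.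

Definition bn n := at_ (Q * S n + P).
Definition cn n := at_ (Q * S n + P + r).
Definition Cterm n s := (cpow_neg (cn n) s - cpow_neg (bn n) s)%C.

Lemma bn_cn n : (1 <= bn n)%nat /\ (bn n <= cn n)%nat /\ (cn n <= bn (S n))%nat.
Proof.
  unfold bn, cn. split. apply Hpos. nia.
  split. pose proof (sinc_le at_ Hsinc (Q * S n + P) (Q * S n + P + r) ltac:(nia) ltac:(lia)). lia.
  pose proof (sinc_le at_ Hsinc (Q * S n + P + r) (Q * S (S n) + P) ltac:(nia) ltac:(nia)). lia.
Qed.

Lemma tele_Ef sg : 0 < sg -> ex_series (fun n => Ef sg (bn n) - Ef sg (cn n)).
Proof.
  intros Hs. apply (tele_ex _ (fun n => Ef sg (bn n))).
  intros n. destruct (bn_cn n) as [H1 [H2 H3]]. split.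
  assert (Ef sg (cn n) <= Ef sg (bn n)) by (apply Ef_anti; auto; lra). lra.
  assert (Ef sg (bn (S n)) <= Ef sg (cn n)) by (apply Ef_anti; auto; lia || lra). lra.
  intros; left; apply Ef_pos.
Qed.

Lemma T3 : (forall s, 0 < fst s -> ex_series (fun n => Cterm n s)) /\
  Hol (fun s => 0 < fst s) (fun s => CSeries (fun n => Cterm n s)).
Proof.
  assert (PW : forall s, 0 < fst s -> ex_series (fun n => Cterm n s)).
  { intros s Hs. apply (ex_series_le (K:=C_AbsRing) (V:=C_CompleteNormedModule) _
      (fun n => Cmod s / fst s * (Ef (fst s) (bn n) - Ef (fst s) (cn n)))).
    intros n. destruct (bn_cn n) as [H1 [H2 H3]]. apply diff_bound; auto.
    apply (ex_series_scal (K:=R_AbsRing) (V:=R_NormedModule)). apply tele_Ef; auto. }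
  split; auto.
  intros s Hs. set (del := fst s / 2). set (sg1 := fst s - del). set (R0 := Cmod s + del).
  eexists. apply (series_CD (fun n => Cterm n)
    (fun n y => RtoC (- ln (INR (cn n))) * cpow_neg (cn n) y - RtoC (- ln (INR (bn n))) * cpow_neg (bn n) y)%C
    (fun n => (1 + R0 / (sg1/2)) / (sg1/2) * (Ef (sg1/2) (bn n) - Ef (sg1/2) (cn n))) s del).
  - unfold del; lra.
  - intros n y Hy. unfold Cterm. apply CD_minus; apply CD_cpow.
  - intros n y Hy. destruct (bn_cn n) as [H1 [H2 H3]]. apply deriv_bound; auto.
    unfold sg1, del; lra. pose proof (Re_close y s). unfold sg1; lra.
    pose proof (Cmod_le_ball y s). unfold R0; lra.
  - apply (ex_series_scal (K:=R_AbsRing) (V:=R_NormedModule)). apply tele_Ef. unfold sg1, del; lra.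
  - intros y Hy. apply PW. pose proof (Re_close y s). unfold del in *; lra.
Qed.
End T3.

Lemma partial_le_series (a : nat -> R) l N : is_series a l -> (forall n, 0 <= a n) -> sum_n a N <= l.
Proof.
  intros H Hp. apply Rnot_lt_le. intros Hlt.
  assert (He : 0 < (sum_n a N - l) / 2) by lra.
  destruct (Rser_ball _ _ H (mkposreal _ He)) as [M HM]. specialize (HM (max M N) ltac:(lia)). simpl in HM.
  assert (sum_n a N <= sum_n a (max M N)).
  { assert (forall k, sum_n a N <= sum_n a (N + k)).
    { induction k. rewrite Nat.add_0_r. lra. rewrite Nat.add_succ_r, sum_Sn. change plus with Rplus.
      simpl. specialize (Hp (S (N + k))). lra. }
    replace (max M N) with (N + (max M N - N))%nat by lia. apply H0. }
  unfold Rabs in HM. destruct (Rcase_abs _); lra.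
Qed.

Lemma sum_lower (a : nat -> R) c n : (forall m, (m <= n)%nat -> c <= a m) -> INR (S n) * c <= sum_n a n.
Proof.
  induction n; intros H.
  - rewrite sum_O. simpl. specialize (H O ltac:(lia)). lra.
  - rewrite sum_Sn. change plus with Rplus. rewrite S_INR.
    specialize (IHn ltac:(intros; apply H; lia)). specialize (H (S n) ltac:(lia)). simpl in *. lra.
Qed.

Lemma quad_growth (a' : nat -> nat) : strictly_increasing_pos a' -> (1 <= a' 1)%nat ->
  (exists Cst : R, 0 < Cst /\ exists delta : R, 0 < delta /\
     forall t : R, 0 < t < delta ->
       exists l : R, is_series (fun m => exp (- INR (a' (S m)) * t)) l /\ l <= Cst / sqrt t) ->
  exists kap N0, 0 < kap /\ forall n, (N0 <= n)%nat -> kap * INR (S n) ^ 2 <= INR (a' (S n)).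
Proof.
  intros Hs H1 [Cst [HC [del [Hd Hmaj]]]].
  destruct (archimed_cor1 del Hd) as [N0 [HN0 HN0']].
  exists (exp (-1) ^ 2 / Cst ^ 2), N0. split.
  { apply Rdiv_lt_0_compat. apply pow_lt, exp_pos. apply pow_lt; auto. }
  intros n Hn.
  set (x := INR (a' (S n))).
  assert (Hx : INR (S n) <= x) by (apply le_INR, sinc_ge; auto; lia).
  assert (HN0pos : 0 < INR N0) by (apply lt_0_INR; lia).
  assert (HxN : INR N0 <= x) by (apply Rle_trans with (INR (S n)); auto; apply le_INR; lia).
  assert (Hxp : 0 < x) by lra.
  destruct (Hmaj (/ x)) as [l [Hl Hle]].
  { split. apply Rinv_0_lt_compat; auto. apply Rle_lt_trans with (/ INR N0); auto.
    apply Rinv_le_contravar; auto. }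
  assert (Hsum : INR (S n) * exp (-1) <= l).
  { eapply Rle_trans; [|apply (partial_le_series _ _ n Hl)].
    apply sum_lower. intros m Hm. apply exp_le.
    assert (INR (a' (S m)) <= x) by (apply le_INR; pose proof (sinc_le a' Hs (S m) (S n) ltac:(lia) ltac:(lia)); lia).
    assert (0 <= INR (a' (S m))) by apply pos_INR.
    apply Rmult_le_compat_r with (r := / x) in H; [|left; apply Rinv_0_lt_compat; auto].
    rewrite Rinv_r in H by lra. lra.
    intros; left; apply exp_pos. }
  rewrite sqrt_inv in Hle. unfold Rdiv in Hle. rewrite Rinv_inv in Hle.
  assert (Hsq : 0 < sqrt x) by (apply sqrt_lt_R0; auto).
  assert (HA : INR (S n) * exp (-1) <= Cst * sqrt x) by lra.
  assert (HB : 0 <= INR (S n) * exp (-1)) by (apply Rmult_le_pos; [apply pos_INR|left; apply exp_pos]).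
  assert (HC2 : (INR (S n) * exp (-1)) ^ 2 <= (Cst * sqrt x) ^ 2) by (apply pow_incr; auto).
  rewrite Rpow_mult_distr, (Rpow_mult_distr Cst) in HC2.
  replace (sqrt x ^ 2) with x in HC2 by (simpl; rewrite Rmult_1_r, sqrt_sqrt; lra).
  unfold Rdiv. rewrite Rmult_comm, <- Rmult_assoc.
  apply Rmult_le_reg_l with (Cst ^ 2). apply pow_lt; auto.
  replace (Cst ^ 2 * (INR (S n) ^ 2 * exp (-1) ^ 2 * / Cst ^ 2)) with (INR (S n) ^ 2 * exp (-1) ^ 2)
    by (field; lra).
  lra.
Qed.

Definition ind (b : nat -> nat) (f : nat -> C) (x : nat) : C :=
  if excluded_middle_informative (in_seq b x) then f x else RtoC 0.

Section Merge.
Variable b : nat -> nat.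
Variable f : nat -> C.
Hypothesis Hb : strictly_increasing_pos b.
Let g m := f (b (S m)).

Lemma ind_in x : in_seq b x -> ind b f x = f x.
Proof. intros H. unfold ind. destruct (excluded_middle_informative _); tauto. Qed.
Lemma ind_out x : ~ in_seq b x -> ind b f x = RtoC 0.
Proof. intros H. unfold ind. destruct (excluded_middle_informative _); tauto. Qed.

Lemma merge_Z X : (X < b 1)%nat -> sum_n (ind b f) X = RtoC 0.
Proof.
  induction X; intros H.
  - rewrite sum_O. apply ind_out. intros [k [Hk E]]. pose proof (sinc_le b Hb 1 k ltac:(lia) Hk). lia.
  - rewrite sum_Sn, IHX by lia. rewrite ind_out. change plus with Cplus. ceq.
    intros [k [Hk E]]. pose proof (sinc_le b Hb 1 k ltac:(lia) Hk). lia.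
Qed.

Lemma merge_main X : (b 1 <= X)%nat ->
  exists N, (b (S N) <= X < b (S (S N)))%nat /\ sum_n (ind b f) X = sum_n g N.
Proof.
  induction X; intros H.
  - exists O. pose proof (Hb 1%nat ltac:(lia)). split. lia.
    rewrite !sum_O. unfold g. rewrite ind_in. f_equal. lia. exists 1%nat. split; lia.
  - destruct (Nat.eq_dec (b 1) (S X)) as [E|E].
    + exists O. pose proof (Hb 1%nat ltac:(lia)). split. lia.
      rewrite sum_Sn, merge_Z by lia. rewrite sum_O. unfold g. rewrite ind_in.
      change plus with Cplus. rewrite E. ceq. exists 1%nat; split; lia.
    + destruct (IHX ltac:(lia)) as [N [[HN1 HN2] HS]].
      destruct (Nat.eq_dec (S X) (b (S (S N)))) as [E2|E2].
      * exists (S N). pose proof (Hb (S (S N)) ltac:(lia)). split. lia.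
        rewrite sum_Sn, HS, (sum_Sn g N). f_equal. unfold g. rewrite E2. apply ind_in.
        exists (S (S N)); split; lia.
      * exists N. split. lia. rewrite sum_Sn, HS. rewrite ind_out. change plus with Cplus. ceq.
        intros [k [Hk Ek]].
        assert (b (S N) < b k)%nat by lia. assert (b k < b (S (S N)))%nat by lia.
        apply (sinc_lt_inv b Hb) in H0; try lia. apply (sinc_lt_inv b Hb) in H1; try lia.
Qed.

Lemma merge_fwd l : is_series g l -> is_series (ind b f) l.
Proof.
  intros H. apply Cser_ball'. intros eps. destruct (Cser_ball _ _ H eps) as [N0 HN0].
  exists (b (S N0)). intros X HX.
  assert (b 1 <= X)%nat by (pose proof (sinc_le b Hb 1 (S N0) ltac:(lia) ltac:(lia)); lia).
  destruct (merge_main X H0) as [N [[H1 H2] H3]]. rewrite H3. apply HN0.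
  assert (b (S N0) < b (S (S N)))%nat by lia. apply (sinc_lt_inv b Hb) in H4; lia.
Qed.

Lemma merge_bwd l : is_series (ind b f) l -> is_series g l.
Proof.
  intros H. apply Cser_ball'. intros eps. destruct (Cser_ball _ _ H eps) as [N0 HN0].
  exists N0. intros n Hn.
  assert (Hge : (b 1 <= b (S n))%nat) by (pose proof (sinc_le b Hb 1 (S n) ltac:(lia) ltac:(lia)); lia).
  destruct (merge_main (b (S n)) Hge) as [N [[H1 H2] H3]].
  assert (N = n).
  { destruct (Nat.lt_total N n) as [L|[L|L]]; auto.
    - pose proof (sinc_le b Hb (S (S N)) (S n) ltac:(lia) ltac:(lia)). lia.
    - pose proof (sinc_le b Hb (S n) (S N) ltac:(lia) ltac:(lia)). pose proof (Hb (S n) ltac:(lia)).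
      pose proof (sinc_le b Hb (S (S n)) (S N) ltac:(lia) ltac:(lia)). lia. }
  subst N. rewrite <- H3. apply HN0.
  pose proof (sinc_le b Hb 1 (S n) ltac:(lia) ltac:(lia)). lia.
Qed.
End Merge.

Lemma rsum_ext n F G : (forall k, (k < n)%nat -> F k = G k) -> rsum n F = rsum n G.
Proof. induction n; intros H; simpl; auto. rewrite IHn by (intros; apply H; lia). rewrite H by lia. auto. Qed.

Lemma rsum_plus n F G : rsum n (fun k => F k + G k)%C = (rsum n F + rsum n G)%C.
Proof. induction n; simpl. ceq. rewrite IHn. generalize (rsum n F) (rsum n G). intros; ceq. Qed.

Lemma rsum_const n c : rsum n (fun _ => c) = (RtoC (INR n) * c)%C.
Proof. induction n; simpl rsum. ceq. rewrite IHn, S_INR. ceq. Qed.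

Lemma rsum_add K Q u : rsum (K + Q) u = (rsum K u + rsum Q (fun r => u (K + r)%nat))%C.
Proof.
  induction Q; simpl. rewrite Nat.add_0_r. ceq.
  rewrite Nat.add_succ_r. simpl. rewrite IHQ. generalize (rsum K u) (rsum Q (fun r => u (K + r)%nat)). intros; ceq.
Qed.

Lemma rsum_swap A B (F : nat -> nat -> C) :
  rsum A (fun n => rsum B (fun r => F n r)) = rsum B (fun r => rsum A (fun n => F n r)).
Proof.
  induction A; simpl.
  - rewrite rsum_const. ceq.
  - rewrite IHA. rewrite <- rsum_plus. reflexivity.
Qed.

Lemma sum_n_rsum (u : nat -> C) K : sum_n u K = rsum (S K) u.
Proof.
  induction K. rewrite sum_O. simpl. ceq. rewrite sum_Sn, IHK. change plus with Cplus. reflexivity.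
Qed.

Lemma is_series_rsum Q (F : nat -> nat -> C) L :
  (forall r, (r < Q)%nat -> is_series (F r) (L r)) ->
  is_series (fun n => rsum Q (fun r => F r n)) (rsum Q L).
Proof.
  induction Q; intros H.
  - simpl. apply Cser_ball'. intros eps. exists O. intros n _.
    rewrite sum_n_rsum. rewrite rsum_const.
    replace (RtoC (INR (S n)) * RtoC 0 - RtoC 0)%C with (RtoC 0) by ceq. rewrite Cmod_0. apply cond_pos.
  - simpl. apply is_series_Cplus. apply IHQ; intros; apply H; lia. apply H; lia.
Qed.

Lemma block (g : nat -> C) Q P N : (1 <= Q)%nat ->
  rsum (Q * (N + 2) + P - 1) (fun k => g (S k)) =
  (rsum (Q + P - 1) (fun k => g (S k)) + rsum (S N) (fun n => rsum Q (fun r => g (Q * S n + P + r)%nat)))%C.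
Proof.
  intros HQ. induction N.
  - replace (Q * (0 + 2) + P - 1)%nat with ((Q + P - 1) + Q)%nat by lia.
    rewrite rsum_add. f_equal. simpl. rewrite (rsum_ext Q _ (fun r => g (Q * 1 + P + r)%nat)).
    generalize (rsum Q (fun r => g (Q * 1 + P + r)%nat)). intros; ceq.
    intros k Hk. f_equal. lia.
  - replace (Q * (S N + 2) + P - 1)%nat with ((Q * (N + 2) + P - 1) + Q)%nat by lia.
    rewrite rsum_add, IHN. change (rsum (S (S N)) ?F) with (rsum (S N) F + F (S N))%C.
    rewrite (rsum_ext Q _ (fun r => g (Q * S (S N) + P + r)%nat)).
    generalize (rsum (Q + P - 1) (fun k => g (S k))) (rsum (S N) (fun n => rsum Q (fun r => g (Q * S n + P + r)%nat)))
      (rsum Q (fun r => g (Q * S (S N) + P + r)%nat)). intros; ceq.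
    intros k Hk. f_equal. lia.
Qed.

Lemma residue (g : nat -> C) Q P D L : (1 <= Q)%nat ->
  is_series (fun m => g (S m)) D ->
  (forall r, (r < Q)%nat -> is_series (fun n => g (Q * S n + P + r)%nat) (L r)) ->
  D = (rsum (Q + P - 1) (fun k => g (S k)) + rsum Q L)%C.
Proof.
  intros HQ HD HL.
  set (h := fun n => rsum Q (fun r => g (Q * S n + P + r)%nat)).
  assert (H1 : is_series h (rsum Q L)).
  { apply (is_series_rsum Q (fun r n => g (Q * S n + P + r)%nat)). auto. }
  assert (H2 : is_series h (D - rsum (Q + P - 1) (fun k => g (S k)))%C).
  { apply Cser_ball'. intros eps. destruct (Cser_ball _ _ HD eps) as [N0 HN0].
    exists N0. intros n Hn.
    assert (E : (sum_n h n - (D - rsum (Q + P - 1) (fun k => g (S k))))%C =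
                (sum_n (fun m => g (S m)) (Q * (n + 2) + P - 2) - D)%C).
    { rewrite !sum_n_rsum. replace (S (Q * (n + 2) + P - 2)) with (Q * (n + 2) + P - 1)%nat by lia.
      rewrite block by auto. unfold h. generalize (rsum (Q + P - 1) (fun k => g (S k))). intros; ceq. }
    rewrite E. apply HN0. nia. }
  pose proof (is_series_Cuniq _ _ _ H1 H2). rewrite H. ceq.
Qed.

Lemma CD_cont f z d : CD f z d -> forall eps, 0 < eps -> exists del, 0 < del /\
  forall y, Cmod (y - z) < del -> Cmod (f y - f z) < eps.
Proof.
  intros H eps He. destruct (H 1 ltac:(lra)) as [d1 [Hd1 H1]].
  set (K := Cmod d + 2). assert (HK : 0 < K) by (unfold K; pose proof (Cmod_ge_0 d); lra).
  exists (Rmin d1 (eps / K)). split. apply Rmin_glb_lt; auto. apply Rdiv_lt_0_compat; auto.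
  intros y Hy. pose proof (Rmin_l d1 (eps / K)). pose proof (Rmin_r d1 (eps / K)).
  specialize (H1 y ltac:(lra)).
  assert (E : (f y - f z)%C = ((f y - f z - d * (y - z)) + d * (y - z))%C) by ceq.
  rewrite E. eapply Rle_lt_trans. apply Cmod_triangle. rewrite Cmod_mult.
  assert (Cmod (y - z) < eps / K) by lra. pose proof (Cmod_ge_0 (y - z)). pose proof (Cmod_ge_0 d).
  assert (Cmod (y - z) * K < eps).
  { apply Rmult_lt_compat_r with (r := K) in H3; auto. unfold Rdiv in H3.
    rewrite Rmult_assoc, Rinv_l, Rmult_1_r in H3 by lra. auto. }
  unfold K in H6. nra.
Qed.

Lemma cexp_Lf w : Cmod w < 1 -> cexp (Lf w) = (/ (RtoC 1 - w))%C.
Proof.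
  intros Hw. apply (Cmult_reg_r _ _ (RtoC 1 - w)). apply one_minus_neq0; auto.
  rewrite Lf_exp by auto. rewrite Cinv_l. auto. apply one_minus_neq0; auto.
Qed.

Lemma zeta_partial_exp (a : nat -> nat) s N :
  (forall m, Cmod (cpow_neg (a (S m)) s) < 1) ->
  zeta_partial a s N = cexp (rsum N (fun m => Lf (cpow_neg (a (S m)) s))).
Proof.
  intros H. induction N.
  - simpl. rewrite cexp_0. reflexivity.
  - simpl. rewrite IHN, cexp_plus, cexp_Lf by auto. reflexivity.
Qed.

Definition DAp (a' : nat -> nat) s := CSeries (fun n => cpow_neg (a' (S n)) s).
Definition P0f (at_ : nat -> nat) Q P s := rsum (Q + P - 1) (fun k => cpow_neg (at_ (S k)) s).
Definition CRf (at_ : nat -> nat) Q P s := rsum Q (fun r => CSeries (fun n => Cterm at_ Q P r n s)).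
Definition LGf (a : nat -> nat) s := CSeries (fun n => Lgc (a (S n)) s).
Definition Etot a a' at_ Q P (G : C -> C) s :=
  (DAp a' s + P0f at_ Q P s + RtoC (INR Q) * G s + CRf at_ Q P s + LGf a s)%C.

Lemma vals_ge2 (b a : nat -> nat) : strictly_increasing_pos a -> (2 <= a 1)%nat -> strictly_increasing_pos b ->
  (forall x, in_seq b x -> in_seq a x) -> forall k, (1 <= k)%nat -> (2 <= b k)%nat.
Proof.
  intros Ha Ha1 Hb Hs k Hk. destruct (Hs (b k) (ex_intro _ k (conj Hk eq_refl))) as [m [Hm E]].
  rewrite <- E. pose proof (sinc_le a Ha 1 m ltac:(lia) Hm). lia.
Qed.

Theorem proposition2p2
  (a a' at_ : nat -> nat) (i j : nat) (U : C -> Prop) (G : C -> C) :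
  (* A = {a_n}, integers >= 2, increasing *)
  strictly_increasing_pos a ->
  (2 <= a 1)%nat ->
  (* A' = {a'_n} subset of A *)
  strictly_increasing_pos a' ->
  (forall x, in_seq a' x -> in_seq a x) ->
  (* sum_n e^{-a'_n t} is majorized by t^{-1/2} as t -> 0+ *)
  (exists Cst : R, 0 < Cst /\ exists delta : R, 0 < delta /\
     forall t : R, 0 < t < delta ->
       exists l : R, is_series (fun m => exp (- INR (a' (S m)) * t)) l /\
                     l <= Cst / sqrt t) ->
  (* \tilde A = A \ A', listed increasingly *)
  strictly_increasing_pos at_ ->
  (forall x, in_seq at_ x <-> (in_seq a x /\ ~ in_seq a' x)) ->
  (* D_{ {\tilde a_{2^i n + j}} } admits a holomorphic continuation G to the domain U *)
  is_domain U ->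
  (exists s, U s /\ 1 < Re s) ->
  holomorphic_on U G ->
  (forall s, U s -> 1 < Re s ->
     is_series (fun m => cpow_neg (at_ (2 ^ i * S m + j)%nat) s) (G s)) ->
  (* then the continuation of zeta_A to U ∩ {Re s > 1/2} exists and does not vanish *)
  exists F : C -> C,
    holomorphic_on (fun s => U s /\ 1/2 < Re s) F /\
    (forall s, U s -> 1 < Re s -> zeta_value a s (F s)) /\
    (forall s, U s -> 1/2 < Re s -> F s <> RtoC 0).
Proof.
  intros Ha Ha1 Ha' Hsub Hmaj Hat Hdiff HU Hex HG HGs.
  set (Q := (2 ^ i)%nat). set (P := j).
  assert (HQ : (1 <= Q)%nat) by (unfold Q; pose proof (Nat.pow_nonzero 2 i ltac:(lia)); lia).
  assert (Hsa : forall x, in_seq a x -> in_seq a x) by auto.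
  assert (Ha2 : forall k, (1 <= k)%nat -> (2 <= a k)%nat) by (apply (vals_ge2 a a); auto).
  assert (Ha'2 : forall k, (1 <= k)%nat -> (2 <= a' k)%nat) by (apply (vals_ge2 a' a); auto).
  assert (Hat2 : forall k, (1 <= k)%nat -> (2 <= at_ k)%nat).
  { apply (vals_ge2 at_ a); auto. intros x Hx. apply Hdiff in Hx. tauto. }
  assert (HaS : forall n, (S n <= a (S n))%nat) by (intros; apply sinc_ge; auto; lia).
  assert (HatS : forall n, (S n <= at_ (S n))%nat).
  { intros; apply sinc_ge; auto. specialize (Hat2 1%nat ltac:(lia)). lia. lia. }
  destruct (quad_growth a' Ha' ltac:(specialize (Ha'2 1%nat ltac:(lia)); lia) Hmaj) as [kap [N0 [Hkap Hq]]].
  assert (Hc1 : forall n, (1 <= a' (S n))%nat) by (intros n; specialize (Ha'2 (S n) ltac:(lia)); lia).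
  assert (Hc2 : forall n, (1 <= at_ (S n))%nat) by (intros n; specialize (Hat2 (S n) ltac:(lia)); lia).
  destruct (dirichlet_hol (fun n => a' (S n)) (1/2) ltac:(lra) Hc1
    (fun sg Hsg => proj2 (quad_series (fun n => a' (S n)) kap N0 Hkap Hc1 Hq sg Hsg))
    (fun sg Hsg => proj1 (quad_series (fun n => a' (S n)) kap N0 Hkap Hc1 Hq sg Hsg)))
    as [DApEx DApHol].
  destruct (dirichlet_hol (fun n => at_ (S n)) 1 ltac:(lra) Hc2
    (fun sg Hsg => proj2 (lin_series (fun n => at_ (S n)) HatS sg Hsg))
    (fun sg Hsg => proj1 (lin_series (fun n => at_ (S n)) HatS sg Hsg))) as [DAtEx _].
  assert (HT3 : forall r, (r < Q)%nat -> (forall s, 0 < fst s -> ex_series (fun n => Cterm at_ Q P r n s)) /\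
     Hol (fun s => 0 < fst s) (fun s => CSeries (fun n => Cterm at_ Q P r n s))).
  { intros r Hr. apply T3; auto. intros k Hk. specialize (Hat2 k Hk). lia. }
  destruct (T4 (fun n => a (S n)) ltac:(intros n; apply Ha2; lia) HaS) as [LGEx LGHol].
  set (F := fun s => cexp (Etot a a' at_ Q P G s)).
  exists F. split; [|split].
  -
    assert (HF : Hol (fun s => U s /\ 1/2 < Re s) F).
    { unfold F, Etot. apply Hol_cexp.
      repeat apply Hol_plus.
      + apply (Hol_mono _ _ _ (fun s (Hs : U s /\ 1/2 < Re s) => proj2 Hs)). exact DApHol.
      + unfold P0f. apply (Hol_rsum _ _ (fun k s => cpow_neg (at_ (S k)) s)). intros k _ s _.
        eexists; apply CD_cpow.
      + apply Hol_scal. intros s [Hs _]. destruct (HG s Hs) as [l Hl]. exists l. apply derive_CD; auto.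
      + unfold CRf. apply (Hol_rsum _ _ (fun r s => CSeries (fun n => Cterm at_ Q P r n s))).
        intros r Hr. apply (Hol_mono (fun s => 0 < fst s)). intros s [_ Hs]. unfold Re in Hs. lra.
        apply (proj2 (HT3 r Hr)).
      + apply (Hol_mono _ _ _ (fun s (Hs : U s /\ 1/2 < Re s) => proj2 Hs)). exact LGHol. }
    intros z Hz. destruct (HF z Hz) as [d Hd]. exists d. apply CD_derive; auto.
  -
    intros s Hs Hs1. unfold Re in Hs1.
    set (f := fun x => cpow_neg x s).
    set (w := fun m => cpow_neg (a (S m)) s).
    assert (Hw : forall m, Cmod (w m) < 1).
    { intros m. unfold w. rewrite Cmod_cpow. apply Ef_lt1. apply Ha2; lia. lra. }
    set (DAt := CSeries (fun n => cpow_neg (at_ (S n)) s)).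
    assert (S1 : is_series (fun n => cpow_neg (a' (S n)) s) (DAp a' s)).
    { apply CSeries_correct. apply DApEx. lra. }
    assert (S2 : is_series (fun n => cpow_neg (at_ (S n)) s) DAt).
    { apply CSeries_correct. apply DAtEx. lra. }
    assert (SA : is_series w (DAp a' s + DAt)%C).
    { apply (merge_bwd a f Ha). apply (is_series_ext (fun x => ind a' f x + ind at_ f x)%C).
      - intros x. unfold ind. destruct (excluded_middle_informative (in_seq a' x)) as [X1|X1];
          destruct (excluded_middle_informative (in_seq at_ x)) as [X2|X2];
          destruct (excluded_middle_informative (in_seq a x)) as [X3|X3].
        all: try (apply Hdiff in X2; tauto).
        all: try (exfalso; apply X3; apply Hsub; auto; fail).
        all: try (ceq).
        exfalso. apply X2. apply Hdiff. tauto.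
      - apply is_series_Cplus. apply (merge_fwd a' f Ha'). exact S1. apply (merge_fwd at_ f Hat). exact S2. }
    assert (HDAt : DAt = (P0f at_ Q P s + (RtoC (INR Q) * G s + CRf at_ Q P s))%C).
    { rewrite (residue (fun k => cpow_neg (at_ k) s) Q P DAt
        (fun r => G s + CSeries (fun n => Cterm at_ Q P r n s))%C HQ S2).
      - unfold P0f, CRf. f_equal. rewrite rsum_plus, rsum_const. reflexivity.
      - intros r Hr. apply (is_series_ext (fun n => cpow_neg (at_ (Q * S n + P)%nat) s + Cterm at_ Q P r n s)%C).
        intros n. unfold Cterm, cn, bn. generalize (cpow_neg (at_ (Q * S n + P)%nat) s). intros; ceq.
        apply is_series_Cplus. apply HGs; auto. apply CSeries_correct. apply (proj1 (HT3 r Hr)). lra. }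
    assert (SL : is_series (fun m => Lf (w m)) (Etot a a' at_ Q P G s)).
    { apply (is_series_ext (fun m => w m + Lgc (a (S m)) s)%C).
      intros m. unfold Lgc, w. ceq.
      replace (Etot a a' at_ Q P G s) with ((DAp a' s + DAt) + LGf a s)%C.
      apply is_series_Cplus; auto. apply CSeries_correct. apply LGEx. lra.
      rewrite HDAt. unfold Etot. ceq. }
    unfold zeta_value. apply (proj2 (filterlim_locally_ball_norm (K:=C_AbsRing) (U:=C_NormedModule) (F:=eventually) _ _)).
    intros eps. destruct (CD_cont cexp _ _ (cexp_CD (Etot a a' at_ Q P G s)) eps (cond_pos eps)) as [d [Hd Hc]].
    destruct (Cser_ball _ _ SL (mkposreal _ Hd)) as [N1 HN1].
    exists (S N1). intros n Hn. unfold ball_norm.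
    change (Cmod (zeta_partial a s n - F s) < eps).
    rewrite zeta_partial_exp by (intros; apply Hw). destruct n. lia.
    rewrite <- sum_n_rsum. apply Hc. apply HN1. lia.
  - intros s Hs Hs1. apply cexp_neq0.
Qed.
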